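(* Let $f:A\to B$ be a ring homomorphism, $\mathfrak b$ an ideal of $B$, and $A\bowtie^f\mathfrak b:=\{(a,f(a)+b): a\in A,\ b\in\mathfrak b\}\subseteq A\times B$. Let $n\in\{1,2,3,4,5\}$. Assume $f^{-1}(\mathfrak b)$ is a regular ideal of $A$ and $\mathfrak b$ is a regular ideal of $B$. Then $A\bowtie^f\mathfrak b$ satisfies condition $(P_n)$ if and only if $A$ and $B$ satisfy condition $(P_n)$ and $\mathfrak b=B$. Likewise, $A\bowtie^f\mathfrak b$ is a locally Prüfer ring if and only if $A$ and $B$ are locally Prüfer rings and $\mathfrak b=B$.
   Context: All rings are commutative with identity. An element is regular if it is not a zerodivisor; an ideal is regular if it contains a regular element. For a ring $R$: $(P_1)$ $R$ is semi-hereditary, i.e. every finitely generated ideal is projective; $(P_2)$ $R$ has weak global dimension at most 1, meaning $R_{\mathfrak p}$ is a valuation domain for every prime (equivalently maximal) ideal $\mathfrak p$; $(P_3)$ $R$ is arithmetical, i.e. every finitely generated ideal is locally principal; $(P_4)$ $R$ is a Gauss ring, i.e. for an indeterminate $T$, every $g\in R[T]$ satisfies $c(gh)=c(g)c(h)$ for all $h\in R[T]$, where $c(\cdot)$ is the content ideal (the ideal generated by the coefficients); $(P_5)$ $R$ is a Prüfer ring, i.e. every regular finitely generated ideal is invertible. $R$ is locally Prüfer if $R_{\mathfrak m}$ is a Prüfer ring for every maximal ideal $\mathfrak m$. *)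

(* Defs.v *)
From HB Require Import structures.
From mathcomp Require Import all_boot all_algebra ring.
From mathcomp Require Import boolp.

Set Implicit Arguments.
Unset Strict Implicit.
Unset Printing Implicit Defensive.

Import GRing.Theory.
Local Open Scope ring_scope.
Local Open Scope quotient_scope.

Section Basic.
Variable R : comPzRingType.

Definition is_ideal (I : R -> Prop) : Prop :=
  [/\ I 0, (forall x y, I x -> I y -> I (x + y))
    & (forall r x, I x -> I (r * x))].

Definition zerodivisor (x : R) : Prop := exists y : R, y != 0 /\ x * y = 0.
Definition regular (x : R) : Prop := ~ zerodivisor x.
Definition regular_ideal (I : R -> Prop) : Prop := exists x, I x /\ regular x.

Definition prime_ideal (P : R -> Prop) : Prop :=
  [/\ is_ideal P, ~ P 1 & forall x y, P (x * y) -> P x \/ P y].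

Definition maximal_ideal (M : R -> Prop) : Prop :=
  [/\ is_ideal M, ~ M 1 &
      forall J : R -> Prop, is_ideal J -> (forall x, M x -> J x) ->
        J 1 \/ (forall x, J x -> M x)].

Definition gen_ideal (n : nat) (a : 'I_n -> R) : R -> Prop :=
  fun x => exists r : 'I_n -> R, x = \sum_(i < n) r i * a i.

Definition ideal_of (X : R -> Prop) : R -> Prop :=
  fun x => exists n (r g : 'I_n -> R),
    (forall i, X (g i)) /\ x = \sum_(i < n) r i * g i.

Definition prod_set (I J : R -> Prop) : R -> Prop :=
  fun x => exists n (a b : 'I_n -> R),
    (forall i, I (a i) /\ J (b i)) /\ x = \sum_(i < n) a i * b i.

Definition same_set (I J : R -> Prop) : Prop := forall x, I x <-> J x.

Definition principal_ideal (I : R -> Prop) : Prop :=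
  exists g : R, same_set I (fun x => exists r, x = r * g).

Definition valuation_domain : Prop :=
  [/\ (1 != 0 :> R),
      (forall x y : R, x * y = 0 -> x = 0 \/ y = 0)
    & (forall x y : R, (exists c, y = x * c) \/ (exists c, x = y * c))].

(* finitely generated projective ideal: I is a retract (direct summand) of a *)
(* finite free module R^m, i.e. there are R-linear maps p : R^m -> I and     *)
(* s : I -> R^m with p \o s = id_I                                           *)
Definition projective_ideal (I : R -> Prop) : Prop :=
  exists (m : nat) (p : 'rV[R]_m -> R) (s : R -> 'rV[R]_m),
    [/\ (forall c u v, p (c *: u + v) = c * p u + p v),
        (forall u, I (p u)),
        (forall c x y, I x -> I y -> s (c * x + y) = c *: s x + s y)
      & (forall x, I x -> p (s x) = x)].

Lemma maximal_prime (M : R -> Prop) : maximal_ideal M -> prime_ideal M.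
Proof.
case=> [[M0 MD MM] M1 Mmax]; split=> // x y Mxy.
have [Mx|Mx] := pselect (M x); [by left|right].
pose J := fun z => exists m r, M m /\ z = m + r * x.
have hJ : is_ideal J.
  split.
  - by exists 0, 0; rewrite mul0r addr0.
  - move=> _ _ [m [r [Mm ->]]] [m' [r' [Mm' ->]]].
    exists (m + m'), (r + r'); split; first exact: MD.
    by rewrite mulrDl !addrA [m + _ + m']addrAC.
  - move=> c _ [m [r [Mm ->]]]; exists (c * m), (c * r).
    by split; [exact: MM|rewrite mulrDr mulrA].
have MJ : forall z, M z -> J z by move=> z Mz; exists z, 0; rewrite mul0r addr0.
case: (Mmax J hJ MJ) => [[m [r [Mm e1]]]|JM]; last first.
  by exfalso; apply: Mx; apply: JM; exists 0, 1; rewrite mul1r add0r.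
have -> : y = y * m + r * (x * y).
  have e2 : y = y * (m + r * x).
    rewrite -e1 mulr1. reflexivity.
  by rewrite {1}e2; ring.
apply: MD; first by apply: MM.
by apply: MM.
Qed.

Lemma prime_compl_1 (P : R -> Prop) : prime_ideal P -> ~ P 1.
Proof. by case. Qed.

Lemma prime_compl_M (P : R -> Prop) : prime_ideal P ->
  forall x y, ~ P x -> ~ P y -> ~ P (x * y).
Proof. by case=> _ _ hP x y nx ny /hP []. Qed.

Lemma regular1 : regular 1.
Proof. by move=> [y [/eqP y0 h]]; apply: y0; rewrite mul1r in h. Qed.

Lemma regularM x y : regular x -> regular y -> regular (x * y).
Proof.
move=> rx ry [z [z0 h]]; case: (eqVneq (y * z) 0) => [yz|yz].
  by apply: ry; exists z.
by apply: rx; exists (y * z); split=> //; rewrite mulrA.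
Qed.

End Basic.

Module Loc.
Section Loc.
Variables (R : comPzRingType) (S : R -> Prop).
Hypotheses (S1 : S 1) (SM : forall x y, S x -> S y -> S (x * y)).

Inductive lpair := LPair { lval :> R * R; _ : `[< S lval.2 >] }.
HB.instance Definition _ := [isSub for lval].
HB.instance Definition _ := [Choice of lpair by <:].

Lemma lpS (x : lpair) : S x.2.
Proof. exact/asboolP/(valP x). Qed.

Definition mkLP (a s : R) (h : S s) : lpair := @LPair (a, s) (introT (asboolP _) h).

Definition equivl (x y : lpair) : bool :=
  `[< exists u, S u /\ u * (x.1 * y.2 - y.1 * x.2) = 0 >].

Lemma equivl_refl : reflexive equivl.
Proof. by move=> x; apply/asboolP; exists 1; split=> //; rewrite subrr mulr0. Qed.

Lemma equivl_sym : symmetric equivl.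
Proof.
move=> x y; apply/asboolP/asboolP => -[u [Su h]]; exists u; split=> //;
  by rewrite -opprB mulrN h oppr0.
Qed.

Lemma equivl_trans : transitive equivl.
Proof.
move=> y x z /asboolP [u [Su h1]] /asboolP [v [Sv h2]]; apply/asboolP.
exists (u * v * y.2); split; first by apply: SM; [apply: SM|apply: lpS].
have -> : u * v * y.2 * (x.1 * z.2 - z.1 * x.2) =
   v * z.2 * (u * (x.1 * y.2 - y.1 * x.2)) + u * x.2 * (v * (y.1 * z.2 - z.1 * y.2))
  by ring.
by rewrite h1 h2 !mulr0 addr0.
Qed.

Canonical equivl_equiv := EquivRel equivl equivl_refl equivl_sym equivl_trans.

Definition type := {eq_quot equivl}.
HB.instance Definition _ : EqQuotient _ equivl type := EqQuotient.on type.
HB.instance Definition _ := Choice.on type.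

Definition zerol := mkLP 0 S1.
Definition onel := mkLP 1 S1.
Definition addl (x y : lpair) := mkLP (x.1 * y.2 + y.1 * x.2) (SM (lpS x) (lpS y)).
Definition oppl (x : lpair) := mkLP (- x.1) (lpS x).
Definition mull (x y : lpair) := mkLP (x.1 * y.1) (SM (lpS x) (lpS y)).

Definition add := lift_op2 type addl.
Definition opp := lift_op1 type oppl.
Definition mul := lift_op2 type mull.
Definition zero : type := \pi zerol.
Definition one : type := \pi onel.

Lemma eqlP (x y : lpair) (u : R) : S u ->
  u * (x.1 * y.2 - y.1 * x.2) = 0 -> \pi_type x = \pi_type y.
Proof. by move=> Su h; apply/eqmodP/asboolP; exists u. Qed.

Lemma pi_add : {morph \pi : x y / addl x y >-> add x y}.
Proof.
move=> x y; unlock add; apply/eqmodP/asboolP.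
have /asboolP [u [Su hu]] : equivl (repr (\pi_type x)) x by rewrite -eqmodE reprK.
have /asboolP [v [Sv hv]] : equivl (repr (\pi_type y)) y by rewrite -eqmodE reprK.
set x' := repr (\pi_type x) in hu *; set y' := repr (\pi_type y) in hv *.
exists (u * v); split; first exact: SM.
rewrite /=.
transitivity (- (v * y'.2 * y.2) * (u * (x'.1 * x.2 - x.1 * x'.2)) -
  u * x'.2 * x.2 * (v * (y'.1 * y.2 - y.1 * y'.2))); first by ring.
by rewrite hu hv !mulr0 subrr.
Qed.
Canonical pi_add_morph := PiMorph2 pi_add.

Lemma pi_opp : {morph \pi : x / oppl x >-> opp x}.
Proof.
move=> x; unlock opp; apply/eqmodP/asboolP.
have /asboolP [u [Su hu]] : equivl (repr (\pi_type x)) x by rewrite -eqmodE reprK.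
set x' := repr (\pi_type x) in hu *.
exists u; split=> //=.
transitivity (u * (x'.1 * x.2 - x.1 * x'.2)); first by ring.
by rewrite hu.
Qed.
Canonical pi_opp_morph := PiMorph1 pi_opp.

Lemma pi_mul : {morph \pi : x y / mull x y >-> mul x y}.
Proof.
move=> x y; unlock mul; apply/eqmodP/asboolP.
have /asboolP [u [Su hu]] : equivl (repr (\pi_type x)) x by rewrite -eqmodE reprK.
have /asboolP [v [Sv hv]] : equivl (repr (\pi_type y)) y by rewrite -eqmodE reprK.
set x' := repr (\pi_type x) in hu *; set y' := repr (\pi_type y) in hv *.
exists (u * v); split; first exact: SM.
rewrite /=.
transitivity (- (v * y'.1 * y.2) * (u * (x'.1 * x.2 - x.1 * x'.2)) -
  u * x.1 * x'.2 * (v * (y'.1 * y.2 - y.1 * y'.2))); first by ring.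
by rewrite hu hv !mulr0 subrr.
Qed.
Canonical pi_mul_morph := PiMorph2 pi_mul.

Lemma addA : associative add.
Proof.
elim/quotW=> x; elim/quotW=> y; elim/quotW=> z; rewrite !piE.
by apply: (@eqlP _ _ 1) => //=; ring.
Qed.

Lemma addC : commutative add.
Proof.
elim/quotW=> x; elim/quotW=> y; rewrite !piE.
by apply: (@eqlP _ _ 1) => //=; ring.
Qed.

Lemma add0 : left_id zero add.
Proof.
elim/quotW=> x; rewrite /zero !piE.
by apply: (@eqlP _ _ 1) => //=; ring.
Qed.

Lemma addN : left_inverse zero opp add.
Proof.
elim/quotW=> x; rewrite /zero !piE.
by apply: (@eqlP _ _ 1) => //=; ring.
Qed.

HB.instance Definition _ := GRing.isZmodule.Build type addA addC add0 addN.

Lemma mulA : associative mul.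
Proof.
elim/quotW=> x; elim/quotW=> y; elim/quotW=> z; rewrite !piE.
by apply: (@eqlP _ _ 1) => //=; ring.
Qed.

Lemma mulC : commutative mul.
Proof.
elim/quotW=> x; elim/quotW=> y; rewrite !piE.
by apply: (@eqlP _ _ 1) => //=; ring.
Qed.

Lemma mul1 : left_id one mul.
Proof.
elim/quotW=> x; rewrite /one !piE.
by apply: (@eqlP _ _ 1) => //=; ring.
Qed.

Lemma mulDl : left_distributive mul add.
Proof.
elim/quotW=> x; elim/quotW=> y; elim/quotW=> z.
rewrite !piE.
by apply: (@eqlP _ _ 1) => //=; ring.
Qed.

HB.instance Definition _ := GRing.Zmodule_isComPzRing.Build type mulA mulC mul1 mulDl.

Definition iota (r : R) : type := \pi_type (mkLP r S1).

End Loc.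
End Loc.
HB.export Loc.


Definition loc_at (R : comPzRingType) (P : R -> Prop) (hP : prime_ideal P) : Type :=
  Loc.type (prime_compl_1 hP) (prime_compl_M hP).
HB.instance Definition _ (R : comPzRingType) (P : R -> Prop) (hP : prime_ideal P) :=
  GRing.ComPzRing.on (loc_at hP).

Definition loc_map_at (R : comPzRingType) (P : R -> Prop) (hP : prime_ideal P)
  : R -> loc_at hP :=
  Loc.iota (prime_compl_1 hP) (prime_compl_M hP).

Definition total_quotient (R : comPzRingType) : Type :=
  Loc.type (@regular1 R) (@regularM R).
HB.instance Definition _ (R : comPzRingType) :=
  GRing.ComPzRing.on (total_quotient R).

Definition to_total (R : comPzRingType) : R -> total_quotient R :=
  Loc.iota (@regular1 R) (@regularM R).


Section Conditions.
Variable R : comPzRingType.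

Definition image_set (T : Type) (phi : R -> T) (I : R -> Prop) : T -> Prop :=
  fun t => exists r, I r /\ t = phi r.

Definition semihereditary : Prop :=
  forall (n : nat) (a : 'I_n -> R), projective_ideal (gen_ideal a).

Definition wgldim_le1 : Prop :=
  forall (P : R -> Prop) (hP : prime_ideal P), valuation_domain (loc_at hP).

Definition arithmetical : Prop :=
  forall (n : nat) (a : 'I_n -> R) (M : R -> Prop) (hM : maximal_ideal M),
    principal_ideal
      (ideal_of (image_set (loc_map_at (maximal_prime hM)) (gen_ideal a))).

Definition submodule_Q (J : total_quotient R -> Prop) : Prop :=
  [/\ J 0, (forall x y, J x -> J y -> J (x + y))
    & (forall r x, J x -> J (to_total r * x))].

Definition invertible_ideal (I : R -> Prop) : Prop :=
  exists J : total_quotient R -> Prop, submodule_Q J /\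
    same_set (prod_set (image_set (@to_total R) I) J)
             (image_set (@to_total R) (fun _ => True)).

Definition prufer : Prop :=
  forall (n : nat) (a : 'I_n -> R),
    regular_ideal (gen_ideal a) -> invertible_ideal (gen_ideal a).

End Conditions.

Definition locally_prufer (R : comPzRingType) : Prop :=
  forall (M : R -> Prop) (hM : maximal_ideal M), prufer (loc_at (maximal_prime hM)).

Definition content (R : comNzRingType) (p : {poly R}) : R -> Prop :=
  gen_ideal (fun i : 'I_(size p) => p`_i).

Definition gauss_ring (R : comNzRingType) : Prop :=
  forall g h : {poly R}, same_set (content (g * h)) (prod_set (content g) (content h)).

Definition Pcond (n : nat) (R : comNzRingType) : Prop :=
  match n with
  | S O => semihereditary R
  | S (S O) => wgldim_le1 R
  | S (S (S O)) => arithmetical R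
  | S (S (S (S O))) => gauss_ring R
  | S (S (S (S (S O)))) => prufer R
  | _ => False
  end.

Section Amalgamation.
Variables (A B : comNzRingType) (f : {rmorphism A -> B}) (b : B -> Prop).
Hypothesis hb : is_ideal b.

Definition amalg_pred : pred (A * B) :=
  fun x => `[< exists (a : A) (y : B), b y /\ x = (a, f a + y) >].

Lemma amalg_subring : subring_closed amalg_pred.
Proof.
case: hb => b0 bD bM.
have bN : forall y, b y -> b (- y) by move=> y /(bM (-1)); rewrite mulN1r.
split.
- by apply/asboolP; exists 1, 0; split=> //; rewrite rmorph1 addr0.
- move=> _ _ /asboolP [a [y [hy ->]]] /asboolP [a' [y' [hy' ->]]].
  apply/asboolP; exists (a - a'), (y - y'); split; first by apply: (bD) => //; exact: (bN).
  by congr (_, _); rewrite rmorphB /=; ring.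
- move=> _ _ /asboolP [a [y [hy ->]]] /asboolP [a' [y' [hy' ->]]].
  apply/asboolP; exists (a * a'), (f a * y' + y * f a' + y * y'); split.
    apply: (bD); last exact: (bM).
    apply: (bD); first exact: (bM).
    by rewrite mulrC; exact: (bM).
  by congr (_, _); rewrite rmorphM /=; ring.
Qed.

Record amalgamation := Amalg { amval :> A * B; _ : amval \in amalg_pred }.
HB.instance Definition _ := [isSub for amval].
HB.instance Definition _ := [Choice of amalgamation by <:].
HB.instance Definition _ := GRing.isSubringClosed.Build _ amalg_pred amalg_subring.
HB.instance Definition _ := [SubChoice_isSubComNzRing of amalgamation by <:].

Definition amalg_ring : comNzRingType := GRing.ComNzRing.clone amalgamation _.

End Amalgamation.

Arguments amalg_ring {A B} f {b} hb.

(* Main.v *)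
Require Import Defs.
From HB Require Import structures.
From mathcomp Require Import all_boot all_algebra.
From mathcomp Require Import boolp.
From mathcomp Require Import ring.
From mathcomp Require classical_sets.
Set Implicit Arguments.
Unset Strict Implicit.
Unset Printing Implicit Defensive.
Import GRing.Theory.
Local Open Scope ring_scope.
Local Open Scope quotient_scope.

Section LocLemmas.
Variables (R : comPzRingType) (S : R -> Prop).
Hypotheses (S1 : S 1) (SM : forall x y, S x -> S y -> S (x * y)).
Local Notation LT := (Loc.type S1 SM).

Definition lfrac (a s : R) (h : S s) : LT := \pi_LT (Loc.mkLP a h).

Lemma lfrac_irr a s (h h' : S s) : lfrac a h = lfrac a h'.
Proof. by rewrite /lfrac /Loc.mkLP; congr (\pi _); congr Loc.LPair; apply: eq_irrelevance. Qed.

Lemma lfrac_eq a s a' s' (h : S s) (h' : S s') :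
  lfrac a h = lfrac a' h' <-> exists u, S u /\ u * (a * s' - a' * s) = 0.
Proof.
split; last by move=> [u [Su hu]]; apply: (Loc.eqlP S1 SM) Su _.
by move=> /eqmodP /asboolP.
Qed.

Lemma lfrac_surj (q : LT) : exists a s (h : S s), q = lfrac a h.
Proof.
elim/quotW: q => x; exists x.1, x.2, (Loc.lpS x); rewrite /lfrac; congr (\pi _).
by apply: val_inj; case: x => [[]].
Qed.

Lemma lfrac_add a s a' s' (h : S s) (h' : S s') :
  lfrac a h + lfrac a' h' = lfrac (a * s' + a' * s) (SM h h').
Proof.
rewrite /lfrac. have -> : (\pi_LT (Loc.mkLP a h) + \pi_LT (Loc.mkLP a' h')) =
  @Loc.add _ _ S1 SM (\pi_LT (Loc.mkLP a h)) (\pi_LT (Loc.mkLP a' h')) by [].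
by rewrite -(Loc.pi_add S1 SM); apply: lfrac_irr.
Qed.

Lemma lfrac_mul a s a' s' (h : S s) (h' : S s') :
  lfrac a h * lfrac a' h' = lfrac (a * a') (SM h h').
Proof.
rewrite /lfrac. have -> : (\pi_LT (Loc.mkLP a h) * \pi_LT (Loc.mkLP a' h')) =
  @Loc.mul _ _ S1 SM (\pi_LT (Loc.mkLP a h)) (\pi_LT (Loc.mkLP a' h')) by [].
by rewrite -(Loc.pi_mul S1 SM); apply: lfrac_irr.
Qed.

Lemma lfrac_opp a s (h : S s) : - lfrac a h = lfrac (- a) h.
Proof.
rewrite /lfrac. have -> : - (\pi_LT (Loc.mkLP a h)) =
  @Loc.opp _ _ S1 SM (\pi_LT (Loc.mkLP a h)) by [].
by rewrite -(Loc.pi_opp S1 SM); apply: lfrac_irr.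
Qed.

Lemma lfrac0 : 0 = lfrac 0 S1 :> LT.
Proof. by []. Qed.
Lemma lfrac1 : 1 = lfrac 1 S1 :> LT.
Proof. by []. Qed.

Lemma iotaE a : Loc.iota S1 SM a = lfrac a S1.
Proof. by []. Qed.
End LocLemmas.

Section RB.
Variable R : comPzRingType.
Implicit Types x y : R.

Lemma regularP x : regular x <-> forall y, x * y = 0 -> y = 0.
Proof.
split.
- move=> hx y hy; case: (eqVneq y 0) => // yn; exfalso; apply: hx; exists y; split.
  + exact: yn.
  + exact: hy.
- by move=> h [y [yn hy]]; rewrite (h _ hy) eqxx in yn.
Qed.

Lemma regular_cancel x y z : regular x -> x * y = x * z -> y = z.
Proof.
move=> /regularP h e; apply/eqP; rewrite -subr_eq0; apply/eqP/h.
by rewrite mulrBr e subrr.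
Qed.

Lemma gen_ideal_ideal n (a : 'I_n -> R) : is_ideal (gen_ideal a).
Proof.
split.
- by exists (fun _ => 0); rewrite big1 // => i _; rewrite mul0r.
- move=> _ _ [r ->] [r' ->]; exists (fun i => r i + r' i).
  by rewrite -big_split; apply: eq_bigr => i _; rewrite mulrDl.
- move=> c _ [r ->]; exists (fun i => c * r i).
  by rewrite mulr_sumr; apply: eq_bigr => i _; rewrite mulrA.
Qed.

Lemma gen_mem n (a : 'I_n -> R) i : gen_ideal a (a i).
Proof.
exists (fun j => (j == i)%:R); rewrite (bigD1 i) //= eqxx mul1r big1 ?addr0 //.
by move=> j /negbTE ->; rewrite mul0r.
Qed.

Lemma ideal_sum (I : R -> Prop) (J : finType) (F : J -> R) :
  is_ideal I -> (forall j, I (F j)) -> I (\sum_j F j).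
Proof.
case=> I0 ID _ h; elim/big_ind: _ => //.
Qed.

Definition unit_el x := exists y, x * y = 1.

Definition princ_gen n (a : 'I_n -> R) :=
  exists g, (exists mu : 'I_n -> R, g = \sum_i mu i * a i) /\
            forall i, exists rho, a i = rho * g.

Lemma principal_gen n (a : 'I_n -> R) :
  principal_ideal (gen_ideal a) <-> princ_gen a.
Proof.
split.
- move=> [g hg]; exists g; split.
  + by have /hg := (ex_intro (fun r => g = r * g) 1 (esym (mul1r g))).
  + by move=> i; have /hg := gen_mem a i.
- move=> [g [[mu hmu] hr]]; exists g => x; split.
  + move=> [r ->]; have /choice [rho hrho] := hr.
    exists (\sum_i r i * rho i); rewrite mulr_suml; apply: eq_bigr => i _.
    by rewrite hrho mulrA.
  + move=> [r ->]; exists (fun i => r * mu i); rewrite hmu mulr_sumr.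
    by apply: eq_bigr => i _; rewrite mulrA.
Qed.

End RB.


Record rsplit (X Y : comPzRingType) := Split {
  sp_phi : X -> Y;
  sp_e : X;
  sp_add : forall x y, sp_phi (x + y) = sp_phi x + sp_phi y;
  sp_mul : forall x y, sp_phi (x * y) = sp_phi x * sp_phi y;
  sp_one : sp_phi 1 = 1;
  sp_surj : forall y, exists x, sp_phi x = y;
  sp_ee : sp_e * sp_e = sp_e;
  sp_phie : sp_phi sp_e = 1;
  sp_ker : forall x, sp_phi x = 0 -> sp_e * x = 0 }.

Section SplitTheory.
Variables (X Y : comPzRingType) (sp : rsplit X Y).
Local Notation phi := (sp_phi sp).
Local Notation e := (sp_e sp).

Lemma phi0 : phi 0 = 0.
Proof.
have h := sp_add sp 0 0; rewrite addr0 in h.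
by apply: (@addrI _ (phi 0)); rewrite addr0 -h.
Qed.

Lemma phiN x : phi (- x) = - phi x.
Proof.
apply: (@addrI _ (phi x)); rewrite -sp_add !subrr; exact: phi0.
Qed.

Lemma phiB x y : phi (x - y) = phi x - phi y.
Proof. by rewrite sp_add phiN. Qed.

Lemma phi_sum (I : finType) (F : I -> X) : phi (\sum_i F i) = \sum_i phi (F i).
Proof. exact: (big_morph phi (sp_add sp) phi0). Qed.

Lemma phi_prod (I : finType) (F : I -> X) : phi (\prod_i F i) = \prod_i phi (F i).
Proof. exact: (big_morph phi (sp_mul sp) (sp_one sp)). Qed.

Definition sec (y : Y) : X := e * projT1 (cid (sp_surj sp y)).

Lemma phi_sec y : phi (sec y) = y.
Proof. by rewrite /sec sp_mul sp_phie mul1r; case: (cid _). Qed.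

Lemma e_fixed_uniq z z' : e * z = z -> e * z' = z' -> phi z = phi z' -> z = z'.
Proof.
move=> h h' hp; apply/eqP; rewrite -subr_eq0; apply/eqP.
have : e * (z - z') = 0 by apply: sp_ker; rewrite phiB hp subrr.
by rewrite mulrBr h h'.
Qed.

Lemma e_sec y : e * sec y = sec y.
Proof. by rewrite /sec mulrA sp_ee. Qed.

Lemma sec_phi x : sec (phi x) = e * x.
Proof.
apply: e_fixed_uniq; first exact: e_sec.
  by rewrite mulrA sp_ee.
by rewrite phi_sec sp_mul sp_phie mul1r.
Qed.

Lemma secD y y' : sec (y + y') = sec y + sec y'.
Proof.
apply: e_fixed_uniq; first exact: e_sec.
  by rewrite mulrDr !e_sec.
by rewrite sp_add !phi_sec.
Qed.

Lemma secM y y' : sec (y * y') = sec y * sec y'.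
Proof.
apply: e_fixed_uniq; first exact: e_sec.
  by rewrite mulrA e_sec.
by rewrite sp_mul !phi_sec.
Qed.

Lemma sec1 : sec 1 = e.
Proof.
apply: e_fixed_uniq; first exact: e_sec.
  exact: sp_ee.
by rewrite phi_sec sp_phie.
Qed.

Lemma sec0 : sec 0 = 0.
Proof.
apply: e_fixed_uniq; first exact: e_sec.
  by rewrite mulr0.
by rewrite phi_sec phi0.
Qed.

Lemma secN y : sec (- y) = - sec y.
Proof. by apply: (@addrI _ (sec y)); rewrite -secD !subrr sec0. Qed.

Lemma secB y y' : sec (y - y') = sec y - sec y'.
Proof. by rewrite secD secN. Qed.

Lemma sec_sum (I : finType) (F : I -> Y) : sec (\sum_i F i) = \sum_i sec (F i).
Proof. exact: (big_morph sec secD sec0). Qed.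

Lemma sec_mulr y x : sec y * x = sec (y * phi x).
Proof.
apply: e_fixed_uniq.
- by rewrite mulrA e_sec.
- exact: e_sec.
- by rewrite sp_mul !phi_sec.
Qed.

Lemma phi_regular x : regular x -> regular (phi x).
Proof.
move=> /regularP hx; apply/regularP => y.
have [x' <-] := sp_surj sp y => hy.
have h : e * (x * x') = 0 by apply: sp_ker; rewrite sp_mul hy.
have : e * x' = 0 by apply: hx; rewrite mulrCA h.
by move=> h'; rewrite -[phi x']mul1r -(sp_phie sp) -sp_mul h' phi0.
Qed.

Lemma phi_ideal (I : Y -> Prop) : is_ideal I -> is_ideal (fun x => I (phi x)).
Proof.
case=> I0 ID IM; split.
- by rewrite phi0.
- by move=> x y hx hy; rewrite sp_add; apply: ID.
- by move=> r x hx; rewrite sp_mul; apply: IM.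
Qed.

Lemma prime_pull (P : Y -> Prop) : prime_ideal P -> prime_ideal (fun x => P (phi x)).
Proof.
case=> hI h1 hm; split.
- exact: phi_ideal.
- by rewrite sp_one.
- by move=> x y; rewrite sp_mul => /hm.
Qed.

Definition push (P' : X -> Prop) : Y -> Prop := fun y => exists x, P' x /\ phi x = y.

Lemma push_ideal (I : X -> Prop) : is_ideal I -> is_ideal (push I).
Proof.
case=> I0 ID IM; split.
- by exists 0; rewrite phi0.
- by move=> _ _ [x [hx <-]] [y [hy <-]]; exists (x + y); rewrite sp_add; split=> //; apply: ID.
- move=> r _ [x [hx <-]]; have [r' <-] := sp_surj sp r.
  by exists (r' * x); rewrite sp_mul; split=> //; apply: IM.
Qed.

Lemma push_iff (P' : X -> Prop) : is_ideal P' -> (forall x y, P' (x * y) -> P' x \/ P' y) ->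
  ~ P' e -> forall x, P' x <-> push P' (phi x).
Proof.
move=> [I0 ID IM] hm he x; split; first by move=> h; exists x.
move=> [x' [hx' ex]].
have : P' (e * (x' - x)).
  by rewrite (@sp_ker _ _ sp (x' - x)) // phiB ex subrr.
case/hm => // h.
have -> : x = x' + - 1 * (x' - x) by ring.
by apply: ID => //; apply: IM.
Qed.

Lemma prime_push (P' : X -> Prop) : prime_ideal P' -> ~ P' e -> prime_ideal (push P').
Proof.
move=> hP he; have [hI h1 hm] := hP; have hiff := push_iff hI hm he.
split.
- exact: push_ideal.
- by rewrite -(sp_one sp) -hiff.
- move=> y y'; have [x <-] := sp_surj sp y; have [x' <-] := sp_surj sp y'.
  by rewrite -sp_mul -!hiff => /hm.
Qed.

Lemma max_pull (M : Y -> Prop) : maximal_ideal M -> maximal_ideal (fun x => M (phi x)).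
Proof.
case=> hI h1 hmax; split.
- exact: phi_ideal.
- by rewrite sp_one.
- move=> J hJ hMJ; case: (hmax (push J) (push_ideal hJ)).
  + move=> y My; have [x ex] := sp_surj sp y; exists x; split=> //.
    by apply: hMJ; rewrite ex.
  + move=> [x [Jx ex]]; left.
    have h1e : J (1 - e).
      by apply: hMJ; rewrite phiB sp_one sp_phie subrr; case: hI.
    have hex : J (e * x) by case: hJ => _ _; apply.
    have -> : (1 : X) = e * x + (1 - e) * 1 + e * (1 - x) by ring.
    have hk : e * (1 - x) = 0 by apply: sp_ker; rewrite phiB ex sp_one subrr.
    case: hJ => J0 JD JM; rewrite hk addr0; apply: (JD) => //; by rewrite mulr1.
  + by move=> hJM; right => x Jx; apply: hJM; exists x.
Qed.

Lemma max_push (M : X -> Prop) : maximal_ideal M -> ~ M e -> maximal_ideal (push M).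
Proof.
move=> hM he; have /prime_push /(_ he) [hI h1 _] := maximal_prime hM.
have [hI' _ hmax] := hM; have [_ _ hm] := maximal_prime hM.
have hiff := push_iff hI' hm he.
split => // J hJ hMJ.
case: (hmax (fun x => J (phi x)) (phi_ideal hJ)).
- by move=> x /hiff /hMJ.
- by rewrite sp_one; left.
- move=> h; right => y Jy; have [x ex] := sp_surj sp y.
  by rewrite -ex -hiff; apply: h; rewrite ex.
Qed.

End SplitTheory.

Section IsoInv.
Variables (X Y : comPzRingType) (sp : rsplit X Y).
Hypothesis he : sp_e sp = 1.

Lemma inv_one : sec sp 1 = 1. Proof. by rewrite sec1 he. Qed.
Lemma inv_surj x : exists y, sec sp y = x.
Proof. by exists (sp_phi sp x); rewrite sec_phi he mul1r. Qed.
Lemma inv_ee : (1 : Y) * 1 = 1. Proof. exact: mulr1. Qed.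
Lemma inv_ker y : sec sp y = 0 -> 1 * y = 0.
Proof. by move=> h; rewrite mul1r -(phi_sec sp y) h phi0. Qed.

Definition split_inv : rsplit Y X :=
  @Split Y X (sec sp) 1 (@secD _ _ sp) (@secM _ _ sp) inv_one inv_surj inv_ee inv_one inv_ker.

Lemma split_inv_phi y : sp_phi split_inv y = sec sp y. Proof. by []. Qed.
Lemma split_inv_e : sp_e split_inv = 1. Proof. by []. Qed.
End IsoInv.

Section LocMap.
Variables (X Y : comPzRingType) (SX : X -> Prop) (SY : Y -> Prop).
Hypotheses (SX1 : SX 1) (SXM : forall x y, SX x -> SX y -> SX (x * y)).
Hypotheses (SY1 : SY 1) (SYM : forall x y, SY x -> SY y -> SY (x * y)).
Variable phi : X -> Y.
Hypotheses (hadd : forall x y, phi (x + y) = phi x + phi y)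
           (hmul : forall x y, phi (x * y) = phi x * phi y) (hone : phi 1 = 1).
Hypothesis hS : forall s, SX s -> SY (phi s).

Local Notation LX := (Loc.type SX1 SXM).
Local Notation LY := (Loc.type SY1 SYM).

Definition locmap (q : LX) : LY :=
  lfrac SY1 SYM (phi (repr q).1) (hS (Loc.lpS (repr q))).

Lemma lm_phi0 : phi 0 = 0.
Proof.
have h := hadd 0 0; rewrite addr0 in h.
by apply: (@addrI _ (phi 0)); rewrite addr0 -h.
Qed.

Lemma lm_phiB x y : phi (x - y) = phi x - phi y.
Proof.
rewrite hadd; congr (_ + _); apply: (@addrI _ (phi y)); rewrite -hadd !subrr.
exact: lm_phi0.
Qed.

Lemma locmap_frac a s (h : SX s) :
  locmap (lfrac SX1 SXM a h) = lfrac SY1 SYM (phi a) (hS h).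
Proof.
rewrite /locmap /lfrac.
have /asboolP [u [Su hu]] : Loc.equivl (repr (\pi_LX (Loc.mkLP a h))) (Loc.mkLP a h)
  by rewrite -eqmodE reprK.
apply/lfrac_eq; exists (phi u); split; first exact: hS.
by rewrite -!hmul -lm_phiB -hmul hu lm_phi0.
Qed.

Lemma locmap_add q q' : locmap (q + q') = locmap q + locmap q'.
Proof.
have [a [s [h ->]]] := lfrac_surj q; have [a' [s' [h' ->]]] := lfrac_surj q'.
rewrite lfrac_add !locmap_frac lfrac_add; apply/lfrac_eq; exists 1; split=> //.
by rewrite hadd !hmul subrr mulr0.
Qed.

Lemma locmap_mul q q' : locmap (q * q') = locmap q * locmap q'.
Proof.
have [a [s [h ->]]] := lfrac_surj q; have [a' [s' [h' ->]]] := lfrac_surj q'.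
rewrite lfrac_mul !locmap_frac lfrac_mul; apply/lfrac_eq; exists 1; split=> //.
by rewrite !hmul subrr mulr0.
Qed.

Lemma locmap_one : locmap 1 = 1.
Proof.
rewrite !lfrac1 locmap_frac; apply/lfrac_eq; exists 1; split=> //.
by rewrite hone subrr mulr0.
Qed.

Lemma locmap_iota x : locmap (Loc.iota SX1 SXM x) = Loc.iota SY1 SYM (phi x).
Proof.
rewrite !iotaE locmap_frac; apply/lfrac_eq; exists 1; split=> //.
by rewrite hone subrr mulr0.
Qed.
End LocMap.

Section LocSplit.
Variables (X Y : comPzRingType) (sp : rsplit X Y).
Variables (P : Y -> Prop) (hP : prime_ideal P) (P' : X -> Prop) (hP' : prime_ideal P').
Hypothesis hPP : forall x, P' x <-> P (sp_phi sp x).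

Lemma ls_hS s : ~ P' s -> ~ P (sp_phi sp s).
Proof. by move=> h /hPP. Qed.

Definition lsphi : loc_at hP' -> loc_at hP :=
  locmap (prime_compl_1 hP) (prime_compl_M hP) ls_hS.

Lemma ls_frac a s (h : ~ P' s) :
  lsphi (lfrac (prime_compl_1 hP') (prime_compl_M hP') a h) =
  lfrac (prime_compl_1 hP) (prime_compl_M hP) (sp_phi sp a) (ls_hS h).
Proof. exact: (locmap_frac _ _ _ _ (sp_add sp) (sp_mul sp)). Qed.

Lemma ls_add q q' : lsphi (q + q') = lsphi q + lsphi q'.
Proof. exact: (locmap_add _ _ (sp_add sp) (sp_mul sp)). Qed.
Lemma ls_mul q q' : lsphi (q * q') = lsphi q * lsphi q'.
Proof. exact: (locmap_mul _ _ (sp_add sp) (sp_mul sp)). Qed.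
Lemma ls_one : lsphi 1 = 1.
Proof. exact: (locmap_one _ _ _ _ (sp_add sp) (sp_mul sp) (sp_one sp)). Qed.
Lemma ls_iota x : lsphi (loc_map_at hP' x) = loc_map_at hP (sp_phi sp x).
Proof. exact: (locmap_iota _ _ _ _ (sp_add sp) (sp_mul sp) (sp_one sp)). Qed.

Lemma ls_surj q : exists q', lsphi q' = q.
Proof.
have [a [s [h ->]]] := lfrac_surj q.
have [x ex] := sp_surj sp a; have [t et] := sp_surj sp s.
have ht : ~ P' t by rewrite hPP et.
exists (lfrac (prime_compl_1 hP') (prime_compl_M hP') x ht); rewrite ls_frac.
move: (ls_hS ht); rewrite ex et => h'; exact: lfrac_irr.
Qed.

Lemma ls_ee : (1 : loc_at hP') * 1 = 1. Proof. exact: mulr1. Qed.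

Lemma ls_ker q : lsphi q = 0 -> 1 * q = 0.
Proof.
rewrite mul1r; have [x [s [h ->]]] := lfrac_surj q.
rewrite ls_frac lfrac0 => /lfrac_eq [w [hw hw0]].
have [om eom] := sp_surj sp w.
have hom : ~ P' om by rewrite hPP eom.
have hE : ~ P' (sp_e sp) by rewrite hPP sp_phie; case: hP.
have hk : sp_e sp * (om * x) = 0.
  by apply: sp_ker; rewrite sp_mul eom; move: hw0; rewrite mulr1 mul0r subr0.
rewrite lfrac0; apply/lfrac_eq; exists (sp_e sp * om); split.
  by apply: (prime_compl_M hP').
by rewrite mulr1 mul0r subr0 -mulrA.
Qed.

Definition loc_split : rsplit (loc_at hP') (loc_at hP) :=
  @Split _ _ lsphi 1 ls_add ls_mul ls_one ls_surj ls_ee ls_one ls_ker.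

Lemma loc_split_phi q : sp_phi loc_split q = lsphi q. Proof. by []. Qed.
Lemma loc_split_e : sp_e loc_split = 1. Proof. by []. Qed.
End LocSplit.


Lemma side_choice (R : comPzRingType) (P : R -> Prop) (e1 e2 : R) :
  prime_ideal P -> e1 + e2 = 1 -> ~ P e1 \/ ~ P e2.
Proof.
case=> [[_ PD _] P1 _] he.
case: (pselect (P e1)) => h1; last by left.
case: (pselect (P e2)) => h2; last by right.
by exfalso; apply: P1; rewrite -he; apply: PD.
Qed.

Section ValSplit.
Variables (V W : comPzRingType) (sp : rsplit V W).
Hypothesis he : sp_e sp = 1.

Lemma split_inj x : sp_phi sp x = 0 -> x = 0.
Proof. by move/sp_ker; rewrite he mul1r. Qed.

Lemma val_split : valuation_domain V -> valuation_domain W.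
Proof.
case=> h10 hdom hcmp; split.
- apply/eqP => h; move/eqP: h10; apply; apply: split_inj.
  by rewrite sp_one h.
- move=> x y; have [a <-] := sp_surj sp x; have [b <-] := sp_surj sp y.
  rewrite -sp_mul => /split_inj /hdom [] ->; rewrite phi0; by [left|right].
- move=> x y; have [a <-] := sp_surj sp x; have [b <-] := sp_surj sp y.
  case: (hcmp a b) => [[c ->]|[c ->]]; [left|right]; exists (sp_phi sp c);
    exact: sp_mul.
Qed.
End ValSplit.

Lemma T2 (X Y : comPzRingType) (sp : rsplit X Y) : wgldim_le1 X -> wgldim_le1 Y.
Proof.
move=> hX P hP.
have hP' := prime_pull sp hP.
apply: (@val_split _ _ (@loc_split _ _ sp _ hP _ hP' (fun x => iff_refl _)) (loc_split_e _ _ _)).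
exact: hX.
Qed.

Lemma C2_side (R A : comPzRingType) (sp : rsplit R A) (P' : R -> Prop) (hP' : prime_ideal P') :
  ~ P' (sp_e sp) -> wgldim_le1 A -> valuation_domain (loc_at hP').
Proof.
move=> he hA.
have hP := prime_push hP' he.
have [hI _ hm] := hP'.
have hPP := push_iff hI hm he.
apply: (@val_split _ _ (split_inv (loc_split_e hP hP' hPP)) (split_inv_e _)).
exact: hA.
Qed.

Lemma C2 (R A B : comPzRingType) (spA : rsplit R A) (spB : rsplit R B) :
  sp_e spA + sp_e spB = 1 -> wgldim_le1 A -> wgldim_le1 B -> wgldim_le1 R.
Proof.
move=> he hA hB P' hP'.
case: (side_choice hP' he) => h.
- exact: (C2_side hP' h hA).
- exact: (C2_side hP' h hB).
Qed.

Section IdealOf.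
Variables (R L : comPzRingType) (h : R -> L).
Hypotheses (hadd : forall x y, h (x + y) = h x + h y)
           (hmul : forall x y, h (x * y) = h x * h y) (h0 : h 0 = 0).

Lemma idealof_gen n (a : 'I_n -> R) :
  same_set (ideal_of (image_set h (gen_ideal a))) (gen_ideal (fun i => h (a i))).
Proof.
have hI := gen_ideal_ideal (fun i => h (a i)).
have [I0 ID IM] := hI.
move=> x; split.
- move=> [m [r [g [hg ->]]]]; apply: ideal_sum => // i; apply: (IM).
  have [y [[rho ->] ->]] := hg i.
  rewrite (big_morph h hadd h0); apply: ideal_sum => // j.
  by rewrite hmul; apply: (IM); apply: gen_mem.
- move=> [r ->]; exists n, r, (fun i => h (a i)); split=> // i.
  by exists (a i); split=> //; apply: gen_mem.
Qed.
End IdealOf.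

Lemma iota_add (R : comPzRingType) (S : R -> Prop) (S1 : S 1) SM (x y : R) :
  Loc.iota S1 SM (x + y) = Loc.iota S1 SM x + Loc.iota S1 SM y.
Proof.
rewrite !iotaE lfrac_add; apply/lfrac_eq; exists 1; split => //.
by rewrite !mulr1 subrr mulr0.
Qed.

Lemma iota_mul (R : comPzRingType) (S : R -> Prop) (S1 : S 1) SM (x y : R) :
  Loc.iota S1 SM (x * y) = Loc.iota S1 SM x * Loc.iota S1 SM y.
Proof.
rewrite !iotaE lfrac_mul; apply/lfrac_eq; exists 1; split => //.
by rewrite !mulr1 subrr mulr0.
Qed.

Lemma iota0 (R : comPzRingType) (S : R -> Prop) (S1 : S 1) SM :
  Loc.iota S1 SM 0 = 0.
Proof. by rewrite iotaE lfrac0. Qed.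

Lemma principal_same (R : comPzRingType) (I J : R -> Prop) :
  same_set I J -> principal_ideal I -> principal_ideal J.
Proof. by move=> hIJ [g hg]; exists g => x; rewrite -hg hIJ. Qed.

Definition arith' (R : comPzRingType) :=
  forall n (a : 'I_n -> R) (M : R -> Prop) (hM : maximal_ideal M),
    princ_gen (fun i => loc_map_at (maximal_prime hM) (a i)).

Lemma arithE (R : comPzRingType) : arithmetical R <-> arith' R.
Proof.
have hs : forall n (a : 'I_n -> R) (M : R -> Prop) (hM : maximal_ideal M),
  same_set (ideal_of (image_set (loc_map_at (maximal_prime hM)) (gen_ideal a)))
     (gen_ideal (fun i => loc_map_at (maximal_prime hM) (a i))).
  by move=> n a M hM; apply: idealof_gen; [apply: iota_add|apply: iota_mul|apply: iota0].
split.
- move=> h n a M hM; apply/principal_gen; apply: principal_same (h n a M hM).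
  exact: hs.
- move=> h n a M hM; have /principal_gen := h n a M hM.
  apply: principal_same => x; rewrite hs //.
Qed.

Lemma princ_split (V W : comPzRingType) (sp : rsplit V W) n (c : 'I_n -> V) :
  princ_gen c -> princ_gen (fun i => sp_phi sp (c i)).
Proof.
move=> [g [[mu hmu] hr]]; exists (sp_phi sp g); split.
- exists (fun i => sp_phi sp (mu i)); rewrite hmu phi_sum.
  by apply: eq_bigr => i _; rewrite sp_mul.
- by move=> i; have [rho ->] := hr i; exists (sp_phi sp rho); rewrite sp_mul.
Qed.

Lemma princ_ext (V : comPzRingType) n (c c' : 'I_n -> V) :
  (forall i, c i = c' i) -> princ_gen c -> princ_gen c'.
Proof. by move=> h; have -> : c = c' by apply: funext. Qed.

Lemma T3 (X Y : comPzRingType) (sp : rsplit X Y) : arithmetical X -> arithmetical Y.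
Proof.
move=> /arithE hX; apply/arithE => n a M hM.
have hM' := max_pull sp hM.
have := princ_split (@loc_split _ _ sp _ (maximal_prime hM) _ (maximal_prime hM') (fun x => iff_refl _))
   (hX n (fun i => sec sp (a i)) _ hM').
apply: princ_ext => i.
by rewrite loc_split_phi ls_iota phi_sec.
Qed.

Lemma C3_side (R A : comPzRingType) (sp : rsplit R A) (M' : R -> Prop) (hM' : maximal_ideal M') :
  ~ M' (sp_e sp) -> arithmetical A ->
  forall n (a : 'I_n -> R), princ_gen (fun i => loc_map_at (maximal_prime hM') (a i)).
Proof.
move=> he /arithE hA n a.
have hM := max_push hM' he.
have [hI _ hm] := maximal_prime hM'.
have hPP := push_iff hI hm he.
have E := loc_split_e (maximal_prime hM) (maximal_prime hM') hPP.
have := princ_split (split_inv E) (hA n (fun i => sp_phi sp (a i)) _ hM).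
apply: princ_ext => i.
rewrite split_inv_phi.
have := sec_phi (loc_split (maximal_prime hM) (maximal_prime hM') hPP) (loc_map_at (maximal_prime hM') (a i)).
by rewrite loc_split_phi ls_iota E mul1r.
Qed.

Lemma C3 (R A B : comPzRingType) (spA : rsplit R A) (spB : rsplit R B) :
  sp_e spA + sp_e spB = 1 -> arithmetical A -> arithmetical B -> arithmetical R.
Proof.
move=> he hA hB; apply/arithE => n a M' hM'.
case: (side_choice (maximal_prime hM') he) => h.
- exact: (C3_side hM' h hA).
- exact: (C3_side hM' h hB).
Qed.


Lemma proj_p0 (R : comPzRingType) m (p : 'rV[R]_m -> R) :
  (forall c u v, p (c *: u + v) = c * p u + p v) -> p 0 = 0.
Proof.
move=> hp; have := hp 1 0 0; rewrite scaler0 addr0 mul1r => h.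
by apply: (@addrI _ (p 0)); rewrite addr0 -h.
Qed.

Lemma gen_split (X Y : comPzRingType) (sp : rsplit X Y) n (a : 'I_n -> X) x :
  gen_ideal a x -> gen_ideal (fun i => sp_phi sp (a i)) (sp_phi sp x).
Proof.
move=> [r ->]; exists (fun i => sp_phi sp (r i)); rewrite phi_sum.
by apply: eq_bigr => i _; rewrite sp_mul.
Qed.

Lemma gen_sec (X Y : comPzRingType) (sp : rsplit X Y) n (a : 'I_n -> Y) y :
  gen_ideal a y -> gen_ideal (fun i => sec sp (a i)) (sec sp y).
Proof.
move=> [r ->]; exists (fun i => sec sp (r i)); rewrite sec_sum.
by apply: eq_bigr => i _; rewrite secM.
Qed.

Lemma T1 (X Y : comPzRingType) (sp : rsplit X Y) : semihereditary X -> semihereditary Y.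
Proof.
move=> hX n a.
have [m [p [s [hp hpI hs hps]]]] := hX n (fun i => sec sp (a i)).
exists m, (fun u => sp_phi sp (p (map_mx (sec sp) u))),
          (fun y => map_mx (sp_phi sp) (s (sec sp y))); split.
- move=> c u v.
  have -> : map_mx (sec sp) (c *: u + v) = sec sp c *: map_mx (sec sp) u + map_mx (sec sp) v.
    by apply/matrixP => i j; rewrite !mxE secD secM.
  by rewrite hp sp_add sp_mul phi_sec.
- move=> u; have [r hr] := hpI (map_mx (sec sp) u); rewrite hr phi_sum.
  by exists (fun i => sp_phi sp (r i)); apply: eq_bigr => i _; rewrite sp_mul phi_sec.
- move=> c x y hx hy.
  rewrite secD secM hs; last exact: gen_sec.
    by apply/matrixP => i j; rewrite !mxE sp_add sp_mul phi_sec.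
  exact: gen_sec.
- move=> x hx.
  have -> : map_mx (sec sp) (map_mx (sp_phi sp) (s (sec sp x))) = sp_e sp *: s (sec sp x).
    by apply/matrixP => i j; rewrite !mxE sec_phi.
  have := hp (sp_e sp) (s (sec sp x)) 0; rewrite addr0 (proj_p0 hp) addr0 => ->.
  by rewrite sp_mul sp_phie mul1r hps ?phi_sec //; exact: gen_sec.
Qed.

Lemma C1 (R A B : comPzRingType) (spA : rsplit R A) (spB : rsplit R B) :
  sp_e spA + sp_e spB = 1 -> semihereditary A -> semihereditary B -> semihereditary R.
Proof.
move=> he hA hB n a.
have [mA [pA [qA [hpA hpIA hqA hpqA]]]] := hA n (fun i => sp_phi spA (a i)).
have [mB [pB [qB [hpB hpIB hqB hpqB]]]] := hB n (fun i => sp_phi spB (a i)).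
exists (mA + mB)%N,
  (fun u => sec spA (pA (map_mx (sp_phi spA) (lsubmx u))) +
            sec spB (pB (map_mx (sp_phi spB) (rsubmx u)))),
  (fun x => row_mx (map_mx (sec spA) (qA (sp_phi spA x)))
                   (map_mx (sec spB) (qB (sp_phi spB x)))); split.
- move=> c u v.
  have -> : map_mx (sp_phi spA) (lsubmx (c *: u + v)) =
     sp_phi spA c *: map_mx (sp_phi spA) (lsubmx u) + map_mx (sp_phi spA) (lsubmx v).
    by apply/matrixP => i j; rewrite !mxE sp_add sp_mul.
  have -> : map_mx (sp_phi spB) (rsubmx (c *: u + v)) =
     sp_phi spB c *: map_mx (sp_phi spB) (rsubmx u) + map_mx (sp_phi spB) (rsubmx v).
    by apply/matrixP => i j; rewrite !mxE sp_add sp_mul.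
  rewrite hpA hpB !secD !secM !sec_phi ![sp_e spA * c * _]mulrAC ![sp_e spB * c * _]mulrAC !e_sec.
  ring.
- move=> u.
  have [rA hrA] := hpIA (map_mx (sp_phi spA) (lsubmx u)).
  have [rB hrB] := hpIB (map_mx (sp_phi spB) (rsubmx u)).
  rewrite hrA hrB !sec_sum; exists (fun i => sec spA (rA i) * sp_e spA + sec spB (rB i) * sp_e spB).
  rewrite -big_split /=; apply: eq_bigr => i _; rewrite !secM !sec_phi; ring.
- move=> c x y hx hy.
  rewrite !sp_add !sp_mul hqA; try exact: gen_split.
  rewrite hqB; try exact: gen_split.
  rewrite scale_row_mx add_row_mx; congr row_mx; apply/matrixP => i j;
    rewrite !mxE secD secM sec_phi mulrAC e_sec; ring.
- move=> x hx.
  rewrite row_mxKl row_mxKr.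
  have -> : map_mx (sp_phi spA) (map_mx (sec spA) (qA (sp_phi spA x))) = qA (sp_phi spA x).
    by apply/matrixP => i j; rewrite !mxE phi_sec.
  have -> : map_mx (sp_phi spB) (map_mx (sec spB) (qB (sp_phi spB x))) = qB (sp_phi spB x).
    by apply/matrixP => i j; rewrite !mxE phi_sec.
  rewrite hpqA ?hpqB; try exact: gen_split.
  by rewrite !sec_phi -mulrDl he mul1r.
Qed.


Section Cont.
Variable R : comNzRingType.

Definition cont (N : nat) (p : {poly R}) : R -> Prop :=
  fun x => exists r : 'I_N -> R, x = \sum_(i < N) r i * p`_i.

Definition ext (N : nat) (r : 'I_N -> R) (k : nat) : R :=
  if @insub _ (fun k => k < N)%N _ k is Some i then r i else 0.

Lemma extE N (r : 'I_N -> R) (i : 'I_N) : ext r i = r i.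
Proof. by rewrite /ext valK. Qed.

Lemma sum_size (p : {poly R}) N (F : nat -> R) :
  (size p <= N)%N -> (forall k, (size p <= k)%N -> F k = 0) ->
  \sum_(i < size p) F i = \sum_(i < N) F i.
Proof.
move=> hN hF; rewrite (big_ord_widen N F hN) big_mkcond /=.
apply: eq_bigr => i _; case: ifP => // /negbT; rewrite -leqNgt => /hF ->.
by [].
Qed.

Lemma contE (p : {poly R}) N : (size p <= N)%N -> same_set (content p) (cont N p).
Proof.
move=> hN x; split.
- move=> [r ->]; exists (fun i : 'I_N => ext r i).
  have -> : \sum_(i < size p) r i * p`_i = \sum_(i < size p) ext r i * p`_i.
    by apply: eq_bigr => i _; rewrite extE.
  rewrite (@sum_size p N (fun k => ext r k * p`_k)) //.
  by move=> k hk; rewrite nth_default ?mulr0.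
- move=> [r ->]; exists (fun i : 'I_(size p) => ext r i).
  rewrite (@sum_size p N (fun k => ext r k * p`_k)) //.
    by apply: eq_bigr => i _; rewrite extE.
  by move=> k hk; rewrite nth_default ?mulr0.
Qed.

Lemma cont_ideal N (p : {poly R}) : is_ideal (cont N p).
Proof.
split.
- by exists (fun _ => 0); rewrite big1 // => i _; rewrite mul0r.
- move=> _ _ [r ->] [r' ->]; exists (fun i => r i + r' i).
  by rewrite -big_split; apply: eq_bigr => i _; rewrite mulrDl.
- move=> c _ [r ->]; exists (fun i => c * r i).
  by rewrite mulr_sumr; apply: eq_bigr => i _; rewrite mulrA.
Qed.

End Cont.

Lemma prod_add (R : comPzRingType) (I J : R -> Prop) x y :
  prod_set I J x -> prod_set I J y -> prod_set I J (x + y).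
Proof.
move=> [n [a [b [hab ->]]]] [m [a' [b' [hab' ->]]]].
exists (n + m)%N, (fun i => match fintype.split i with inl j => a j | inr j => a' j end),
  (fun i => match fintype.split i with inl j => b j | inr j => b' j end); split.
- by move=> i; case: (fintype.split i).
- rewrite big_split_ord /=; congr (_ + _); apply: eq_bigr => i _.
  + by rewrite (unsplitK (inl _ i)).
  + by rewrite (unsplitK (inr _ i)).
Qed.

Lemma prod_same (R : comPzRingType) (I J I' J' : R -> Prop) :
  same_set I I' -> same_set J J' -> same_set (prod_set I J) (prod_set I' J').
Proof.
move=> hI hJ x; split; move=> [n [a [b [hab ->]]]]; exists n, a, b; split=> // i;
  by have [h1 h2] := hab i; split; [apply/hI|apply/hJ].
Qed.

Section Maps.
Variables (X Y : comNzRingType) (psi : X -> Y).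
Hypotheses (hadd : forall x y, psi (x + y) = psi x + psi y)
           (hmul : forall x y, psi (x * y) = psi x * psi y) (h0 : psi 0 = 0).

Lemma psi_sum (I : finType) (F : I -> X) : psi (\sum_i F i) = \sum_i psi (F i).
Proof. exact: (big_morph psi hadd h0). Qed.

Lemma cont_map N (p : {poly X}) (q : {poly Y}) (c : Y) :
  (forall i, psi p`_i = c * q`_i) -> forall x, cont N p x -> cont N q (psi x).
Proof.
move=> hc _ [r ->]; exists (fun i => psi (r i) * c); rewrite psi_sum.
by apply: eq_bigr => i _; rewrite hmul hc mulrA.
Qed.

Lemma prod_map (I J : X -> Prop) (I' J' : Y -> Prop) :
  (forall x, I x -> I' (psi x)) -> (forall x, J x -> J' (psi x)) ->
  forall x, prod_set I J x -> prod_set I' J' (psi x).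
Proof.
move=> hI hJ _ [n [a [b [hab ->]]]]; exists n, (fun i => psi (a i)), (fun i => psi (b i)).
split; first by move=> i; have [? ?] := hab i; split; [apply: hI|apply: hJ].
by rewrite psi_sum; apply: eq_bigr => i _; rewrite hmul.
Qed.
End Maps.

Lemma coefM_map (X Y : comNzRingType) (psi : X -> Y) (N : nat)
  (hadd : forall x y, psi (x + y) = psi x + psi y)
  (hmul : forall x y, psi (x * y) = psi x * psi y) (h0 : psi 0 = 0)
  (g h : {poly X}) : (size g <= N)%N -> (size h <= N)%N ->
  forall k, (\poly_(i < N) psi g`_i * \poly_(i < N) psi h`_i)`_k = psi (g * h)`_k.
Proof.
move=> hg hh k; rewrite !coefM (psi_sum hadd h0); apply: eq_bigr => j _.
rewrite !coef_poly hmul.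
have cg : forall i, (if (i < N)%N then psi g`_i else 0) = psi g`_i.
  by move=> i; case: ifP => // /negbT; rewrite -leqNgt => hi;
     rewrite nth_default ?h0 //; apply: leq_trans hi.
have ch : forall i, (if (i < N)%N then psi h`_i else 0) = psi h`_i.
  by move=> i; case: ifP => // /negbT; rewrite -leqNgt => hi;
     rewrite nth_default ?h0 //; apply: leq_trans hi.
by rewrite cg ch.
Qed.

Lemma coef_map_poly (X Y : comNzRingType) (psi : X -> Y) (N : nat) (h0 : psi 0 = 0)
  (g : {poly X}) : (size g <= N)%N -> forall k, (\poly_(i < N) psi g`_i)`_k = psi g`_k.
Proof.
move=> hg k; rewrite coef_poly; case: ifP => // /negbT; rewrite -leqNgt => hi.
by rewrite nth_default ?h0 //; apply: leq_trans hi.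
Qed.

Lemma size_poly_le (Y : comNzRingType) N (E : nat -> Y) : (size (\poly_(i < N) E i) <= N)%N.
Proof. exact: size_poly. Qed.

Lemma size_mul_le (R : comNzRingType) (g h : {poly R}) N :
  (size g <= N)%N -> (size h <= N)%N -> (size (g * h)%R <= N + N)%N.
Proof.
move=> hg hh; apply: leq_trans (size_mul_leq g h) _.
apply: leq_trans (leq_pred _) _; exact: leq_add.
Qed.

Lemma T4 (X Y : comNzRingType) (sp : rsplit X Y) : gauss_ring X -> gauss_ring Y.
Proof.
move=> hX g h.
pose N := (size g + size h)%N.
have hg : (size g <= N)%N by rewrite leq_addr.
have hh : (size h <= N)%N by rewrite leq_addl.
pose g' := \poly_(i < N) sec sp g`_i.
pose h' := \poly_(i < N) sec sp h`_i.
have cg' := coef_map_poly (sec0 sp) hg.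
have ch' := coef_map_poly (sec0 sp) hh.
have cgh := coefM_map (@secD _ _ sp) (@secM _ _ sp) (sec0 sp) hg hh.
pose M := (N + N)%N.
have hNM : (N <= M)%N by rewrite leq_addr.
have sg' : (size g' <= M)%N := leq_trans (size_poly_le _ _) hNM.
have sh' : (size h' <= M)%N := leq_trans (size_poly_le _ _) hNM.
have sg : (size g <= M)%N := leq_trans hg hNM.
have sh : (size h <= M)%N := leq_trans hh hNM.
have sgh : (size (g * h)%R <= M)%N := size_mul_le hg hh.
have sgh' : (size (g' * h')%R <= M)%N := size_mul_le (size_poly_le _ _) (size_poly_le _ _).
have Pg := prod_same (contE sg) (contE sh).
have Pg' := prod_same (contE sg') (contE sh').
move=> x; split.
- move=> /(contE sgh) hx.
  have hx' : cont M (g' * h') (sec sp x).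
    apply: (cont_map (@secD _ _ sp) (@secM _ _ sp) (sec0 sp) (c:=1) (N:=M) (p := g*h) (q := g' * h')) hx => i.
    by rewrite mul1r cgh.
  have /(hX g' h') /Pg' hp : content (g' * h') (sec sp x) by apply/(contE sgh').
  apply/Pg; rewrite -(phi_sec sp x).
  apply: (prod_map (sp_add sp) (sp_mul sp) (phi0 sp) _ _ hp) => y.
  + by apply: (cont_map (sp_add sp) (sp_mul sp) (phi0 sp) (c:=1)) => i; rewrite mul1r cg' phi_sec.
  + by apply: (cont_map (sp_add sp) (sp_mul sp) (phi0 sp) (c:=1)) => i; rewrite mul1r ch' phi_sec.
- move=> /Pg hx.
  have hp : prod_set (cont M g') (cont M h') (sec sp x).
    apply: (prod_map (@secD _ _ sp) (@secM _ _ sp) (sec0 sp) _ _ hx) => y.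
    + by apply: (cont_map (@secD _ _ sp) (@secM _ _ sp) (sec0 sp) (c:=1)) => i; rewrite mul1r cg'.
    + by apply: (cont_map (@secD _ _ sp) (@secM _ _ sp) (sec0 sp) (c:=1)) => i; rewrite mul1r ch'.
  have /(hX g' h') /(contE sgh') hc : prod_set (content g') (content h') (sec sp x) by apply/Pg'.
  apply/(contE sgh); rewrite -(phi_sec sp x).
  have H := (cont_map (sp_add sp) (sp_mul sp) (phi0 sp) (c:=1) (N:=M) (p:=g' * h') (q:=g * h)).
  apply: (H _ _ hc) => i.
  by rewrite mul1r cgh phi_sec.
Qed.

Section C4side.
Variables (R A : comNzRingType) (sp : rsplit R A).
Hypothesis hA : gauss_ring A.
Variables (g h : {poly R}).
Let N := (size g + size h)%N.
Let M := (N + N)%N.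

Lemma C4_side :
  (forall x, content (g * h) x -> prod_set (cont M g) (cont M h) (sp_e sp * x)) /\
  (forall x, prod_set (cont M g) (cont M h) x -> cont M (g * h) (sp_e sp * x)).
Proof.
have hg : (size g <= N)%N by rewrite leq_addr.
have hh : (size h <= N)%N by rewrite leq_addl.
pose gA := \poly_(i < N) sp_phi sp g`_i.
pose hA' := \poly_(i < N) sp_phi sp h`_i.
have cg := coef_map_poly (phi0 sp) hg.
have ch := coef_map_poly (phi0 sp) hh.
have cgh := coefM_map (sp_add sp) (sp_mul sp) (phi0 sp) hg hh.
have hNM : (N <= M)%N by rewrite leq_addr.
have sgA : (size gA <= M)%N := leq_trans (size_poly_le _ _) hNM.
have shA : (size hA' <= M)%N := leq_trans (size_poly_le _ _) hNM.
have sgh : (size (g * h)%R <= M)%N := size_mul_le hg hh.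
have sghA : (size (gA * hA')%R <= M)%N := size_mul_le (size_poly_le _ _) (size_poly_le _ _).
have PA := prod_same (contE sgA) (contE shA).
split.
- move=> x /(contE sgh) hx.
  have H := (cont_map (sp_add sp) (sp_mul sp) (phi0 sp) (c:=1) (N:=M) (p:=g * h) (q:=gA * hA')).
  have hx' := H (fun i => esym (etrans (mul1r _) (cgh i))) _ hx.
  have /(hA gA hA') /PA hp : content (gA * hA') (sp_phi sp x) by apply/(contE sghA).
  rewrite -sec_phi.
  apply: (prod_map (@secD _ _ sp) (@secM _ _ sp) (sec0 sp) _ _ hp) => y.
  + have H2 := (cont_map (@secD _ _ sp) (@secM _ _ sp) (sec0 sp) (c:=sp_e sp) (N:=M) (p:=gA) (q:=g)).
    by apply: H2 => i; rewrite cg sec_phi.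
  + have H2 := (cont_map (@secD _ _ sp) (@secM _ _ sp) (sec0 sp) (c:=sp_e sp) (N:=M) (p:=hA') (q:=h)).
    by apply: H2 => i; rewrite ch sec_phi.
- move=> x hx.
  have hp : prod_set (cont M gA) (cont M hA') (sp_phi sp x).
    apply: (prod_map (sp_add sp) (sp_mul sp) (phi0 sp) _ _ hx) => y.
    + have H2 := (cont_map (sp_add sp) (sp_mul sp) (phi0 sp) (c:=1) (N:=M) (p:=g) (q:=gA)).
      by apply: H2 => i; rewrite mul1r cg.
    + have H2 := (cont_map (sp_add sp) (sp_mul sp) (phi0 sp) (c:=1) (N:=M) (p:=h) (q:=hA')).
      by apply: H2 => i; rewrite mul1r ch.
  have /(hA gA hA') /(contE sghA) hc : prod_set (content gA) (content hA') (sp_phi sp x)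
    by apply/PA.
  rewrite -sec_phi.
  have H2 := (cont_map (@secD _ _ sp) (@secM _ _ sp) (sec0 sp) (c:=sp_e sp) (N:=M) (p:=gA * hA') (q:=g * h)).
  by apply: (H2 _ _ hc) => i; rewrite cgh sec_phi.
Qed.
End C4side.

Lemma C4 (R A B : comNzRingType) (spA : rsplit R A) (spB : rsplit R B) :
  sp_e spA + sp_e spB = 1 -> gauss_ring A -> gauss_ring B -> gauss_ring R.
Proof.
move=> he hA hB g h.
pose N := (size g + size h)%N; pose M := (N + N)%N.
have hNM : (N <= M)%N by rewrite leq_addr.
have sg : (size g <= M)%N := leq_trans (leq_addr _ _) hNM.
have sh : (size h <= M)%N := leq_trans (leq_addl _ _) hNM.
have sgh : (size (g * h)%R <= M)%N := size_mul_le (leq_addr _ _) (leq_addl _ _).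
have P := prod_same (contE sg) (contE sh).
have [a1 a2] := C4_side spA hA g h.
have [b1 b2] := C4_side spB hB g h.
have ex : forall x : R, x = sp_e spA * x + sp_e spB * x by move=> x; rewrite -mulrDl he mul1r.
move=> x; split.
- move=> hx; apply/P; rewrite (ex x); apply: prod_add; [exact: a1|exact: b1].
- move=> /P hx; apply/(contE sgh); rewrite (ex x); case: (cont_ideal M (g * h)) => _ D _.
  apply: D; [exact: a2|exact: b2].
Qed.


Definition invR (R : comPzRingType) n (a : 'I_n -> R) :=
  exists d (c : 'I_n -> R), [/\ regular d,
    (forall i j, exists z, c i * a j = d * z) & \sum_i c i * a i = d].

Lemma prod1 (R : comPzRingType) (I J : R -> Prop) x y :
  I x -> J y -> prod_set I J (x * y).
Proof.
move=> hx hy; exists 1%N, (fun _ => x), (fun _ => y); split=> //.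
by rewrite big_ord1.
Qed.

Section Inv.
Variable R : comPzRingType.
Local Notation Q := (total_quotient R).
Local Notation io := (@to_total R).
Local Notation fr := (@lfrac R (@regular R) (@regular1 R) (@regularM R)).

Lemma io_add x y : io (x + y) = io x + io y. Proof. exact: iota_add. Qed.
Lemma io_mul x y : io (x * y) = io x * io y. Proof. exact: iota_mul. Qed.
Lemma io0 : io 0 = 0. Proof. exact: iota0. Qed.
Lemma io1 : io 1 = 1. Proof. by []. Qed.
Lemma io_sum (I : finType) (F : I -> R) : io (\sum_i F i) = \sum_i io (F i).
Proof. exact: (big_morph io io_add io0). Qed.
Lemma ioE x : io x = fr x (@regular1 R). Proof. by []. Qed.

Lemma io_inj x y : io x = io y -> x = y.
Proof.
rewrite !ioE => /lfrac_eq [u [hu /(regularP _).1]] => /(_ hu) h.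
by apply/eqP; rewrite -subr_eq0 -(mulr1 x) -(mulr1 y); apply/eqP; apply: h.
Qed.

Lemma fr_addn x y s (h : regular s) : fr x h + fr y h = fr (x + y) h.
Proof.
rewrite lfrac_add; apply/lfrac_eq; exists 1; split; first exact: regular1.
by rewrite mul1r; apply/eqP; rewrite subr_eq0; apply/eqP; ring.
Qed.

Lemma fr0 s (h : regular s) : fr 0 h = 0.
Proof.
rewrite lfrac0; apply/lfrac_eq; exists 1; split; first exact: regular1.
by rewrite !mul0r subrr mulr0.
Qed.

Lemma fr_sum (I : finType) (F : I -> R) s (h : regular s) :
  \sum_i fr (F i) h = fr (\sum_i F i) h.
Proof. by rewrite (big_morph (fun x => fr x h) (fun x y => esym (fr_addn x y h)) (fr0 h)). Qed.

Lemma io_fr x y s (h : regular s) : io x * fr y h = fr (x * y) h.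
Proof.
rewrite ioE lfrac_mul; apply/lfrac_eq; exists 1; split; first exact: regular1.
by rewrite mul1r; apply/eqP; rewrite subr_eq0; apply/eqP; ring.
Qed.

Lemma fr_io x s (h : regular s) : fr (s * x) h = io x.
Proof.
rewrite ioE; apply/lfrac_eq; exists 1; split; first exact: regular1.
by rewrite mul1r; apply/eqP; rewrite subr_eq0; apply/eqP; ring.
Qed.

Lemma common_den m (b : 'I_m -> Q) :
  exists d, regular d /\ forall k, exists p, io d * b k = io p.
Proof.
elim: m b => [|m IH] b.
  by exists 1; split; [exact: regular1|case].
have [d0 [hd0 hp0]] := IH (fun k => b (lift ord0 k)).
have [p [s [hs eb]]] := lfrac_surj (b ord0).
exists (d0 * s); split; first exact: regularM.
move=> k; case: (unliftP ord0 k) => [k'|] ->.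
- have [p' hp'] := hp0 k'; exists (s * p').
  by rewrite !io_mul -hp'; ring.
- exists (d0 * p); rewrite eb io_fr -(fr_io (d0 * p) hs).
  by rewrite -mulrA mulrCA.
Qed.

Lemma invE n (a : 'I_n -> R) : invertible_ideal (gen_ideal a) <-> invR a.
Proof.
split.
- move=> [J [[J0 JD JM] hJ]].
  have := (hJ (io 1)).2 (ex_intro _ 1 (conj I (erefl _))).
  move=> [m [al [be [hab e1]]]].
  have /choice [x hx] : forall k, exists x, gen_ideal a x /\ al k = io x.
    by move=> k; have [[y [hy ->]] _] := hab k; exists y.
  have /choice [rho hrho] : forall k, exists r : 'I_n -> R, x k = \sum_i r i * a i.
    by move=> k; have [[r hr] _] := hx k; exists r.
  have [d [hd hp]] := common_den be.
  have /choice [p hpk] := hp.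
  have hz : forall j k, exists z, io (a j) * be k = io z.
    move=> j k; have [z [_ hz]] := (hJ (io (a j) * be k)).1 (prod1 (ex_intro _ (a j) (conj (gen_mem a j) (erefl _))) (hab k).2).
    by exists z.
  have /choice [z hz'] : forall j, exists z : 'I_m -> R, forall k, io (a j) * be k = io (z k).
    by move=> j; have /choice [z hzz] := hz j; exists z.
  have dz : forall j k, d * z j k = a j * p k.
    move=> j k; apply: io_inj; rewrite !io_mul -hz' -hpk; ring.
  have ed : d = \sum_k x k * p k.
    apply: io_inj; rewrite io_sum -[io d]mulr1 -io1 e1 mulr_sumr.
    apply: eq_bigr => k _; have [_ ->] := hx k.
    by rewrite io_mul mulrCA hpk.
  exists d, (fun i => \sum_k rho k i * p k); split => //.
  + move=> i j; exists (\sum_k rho k i * z j k).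
    rewrite mulr_suml mulr_sumr; apply: eq_bigr => k _.
    by rewrite [RHS]mulrCA dz; ring.
  + rewrite ed; under eq_bigr do rewrite mulr_suml.
    rewrite exchange_big /=; apply: eq_bigr => k _.
    by rewrite hrho mulr_suml; apply: eq_bigr => i _; ring.
- move=> [d [c [hd hc hs]]].
  have /choice [z hz] : forall i, exists z : 'I_n -> R, forall j, c i * a j = d * z j.
    by move=> i; have [f hf] := choice (hc i); exists f.
  pose q i := fr (c i) hd.
  pose J := fun y : Q => exists r : 'I_n -> R, y = \sum_i io (r i) * q i.
  have hJ : submodule_Q J.
    split.
    + by exists (fun _ => 0); rewrite big1 // => i _; rewrite io0 mul0r.
    + move=> _ _ [r ->] [r' ->]; exists (fun i => r i + r' i).
      by rewrite -big_split; apply: eq_bigr => i _; rewrite io_add mulrDl.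
    + move=> r _ [r' ->]; exists (fun i => r * r' i); rewrite mulr_sumr.
      by apply: eq_bigr => i _; rewrite io_mul mulrA.
  have key : forall j i, io (a j) * q i = io (z i j).
    by move=> j i; rewrite /q io_fr mulrC hz fr_io.
  exists J; split => // y; split.
  + move=> [m [al [be [hab ->]]]].
    pose Ip := fun w : Q => exists r, w = io r.
    have Ip0 : Ip 0 by exists 0; rewrite io0.
    have IpD : forall u v, Ip u -> Ip v -> Ip (u + v).
      by move=> _ _ [r ->] [r' ->]; exists (r + r'); rewrite io_add.
    have IpS : forall (I : finType) (F : I -> Q), (forall i, Ip (F i)) -> Ip (\sum_i F i).
      by move=> I F hF; elim/big_ind: _ => //.
    suff [r ->] : Ip (\sum_(i < m) al i * be i) by exists r; split.
    apply: (IpS) => k.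
    have [[w [[rho ->] ->]] [r ->]] := hab k.
    rewrite io_sum !mulr_suml; apply: (IpS) => j; rewrite mulr_sumr; apply: (IpS) => i.
    exists (rho j * r i * z i j).
    by rewrite !io_mul -key; ring.
  + move=> [w [_ ->]]; exists n, (fun i => io (a i)), (fun i => io w * q i); split.
    * move=> i; split; first by exists (a i); split=> //; apply: gen_mem.
      exists (fun k => if k == i then w else 0); rewrite (bigD1 i) //= eqxx big1 ?addr0 //.
      by move=> k /negbTE ->; rewrite io0 mul0r.
    * have -> : \sum_i io (a i) * (io w * q i) = io w * \sum_i io (a i) * q i.
        by rewrite mulr_sumr; apply: eq_bigr => i _; ring.
      rewrite /q; under eq_bigr do rewrite io_fr.
      rewrite fr_sum.
      have -> : \sum_i a i * c i = d * 1 by rewrite mulr1 -hs; apply: eq_bigr => i _; ring.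
      by rewrite fr_io io1 mulr1.
Qed.
End Inv.


Lemma T5 (X Y : comPzRingType) (sp : rsplit X Y) : prufer X -> prufer Y.
Proof.
move=> hX n a [y0 [[rho ey0] hy0]].
apply/invE.
pose e := sp_e sp.
pose a' : 'I_n.+1 -> X := fun i => if unlift ord0 i is Some j then sec sp (a j) else 1 - e.
have ha'0 : a' ord0 = 1 - e by rewrite /a' unlift_none.
have ha'l : forall j, a' (lift ord0 j) = sec sp (a j) by move=> j; rewrite /a' liftK.
have hreg : regular_ideal (gen_ideal a').
  exists (1 - e + \sum_j sec sp (rho j) * sec sp (a j)); split.
  - exists (fun i => if unlift ord0 i is Some j then sec sp (rho j) else 1).
    rewrite big_ord_recl unlift_none ha'0 mul1r; congr (_ + _).
    by apply: eq_bigr => j _; rewrite liftK ha'l.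
  - apply/regularP => z hz.
    have hs : \sum_j sec sp (rho j) * sec sp (a j) = sec sp y0.
      by rewrite ey0 sec_sum; apply: eq_bigr => j _; rewrite secM.
    rewrite hs in hz.
    have h1 : (1 - e) * z = 0.
      have EE : e * e = e by exact: sp_ee.
      have A1 : (1 - e) * (1 - e) = 1 - e by rewrite mulrBl mul1r mulrBr mulr1 EE subrr subr0.
      have A2 : (1 - e) * sec sp y0 = 0 by rewrite mulrBl mul1r e_sec subrr.
      by have := congr1 (fun w => (1 - e) * w) hz; rewrite /= mulr0 mulrA mulrDr A1 A2 addr0.
    have h2 : e * z = 0.
      apply: sp_ker; have := congr1 (sp_phi sp) hz.
      rewrite phi0 sp_mul sp_add phiB sp_one sp_phie subrr add0r phi_sec.
      exact: (regularP _).1 hy0 _.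
    by rewrite -[z]mul1r -[1](subrK e) mulrDl h1 h2 addr0.
have [d [c [hd hc hs]]] := (invE a').1 (hX _ _ hreg).
exists (sp_phi sp d), (fun j => sp_phi sp (c (lift ord0 j))); split.
- exact: phi_regular.
- move=> i j; have [z hz] := hc (lift ord0 i) (lift ord0 j).
  exists (sp_phi sp z); rewrite -(phi_sec sp (a j)) -sp_mul -ha'l hz sp_mul //.
- move: hs; rewrite big_ord_recl ha'0 => hs.
  have : sp_phi sp (\sum_(i < n) c (lift ord0 i) * a' (lift ord0 i)) = sp_phi sp d.
    by rewrite -hs sp_add sp_mul phiB sp_one sp_phie subrr mulr0 add0r.
  rewrite phi_sum => <-; apply: eq_bigr => j _; by rewrite sp_mul ha'l phi_sec.
Qed.

Section Cross.
Variables (R A B : comPzRingType) (spA : rsplit R A) (spB : rsplit R B).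
Hypothesis he : sp_e spA + sp_e spB = 1.

Lemma eAB : sp_e spA * sp_e spB = 0.
Proof.
have -> : sp_e spB = 1 - sp_e spA by rewrite -he addrC addKr.
by rewrite mulrBr mulr1 sp_ee subrr.
Qed.

Lemma crossAB x y : sec spA x * sec spB y = 0.
Proof. by rewrite -(e_sec spA x) -(e_sec spB y) mulrACA eAB mul0r. Qed.

Lemma eA_secB y : sp_e spA * sec spB y = 0.
Proof. by rewrite -(e_sec spB y) mulrA eAB mul0r. Qed.

Lemma eB_secA y : sp_e spB * sec spA y = 0.
Proof. by rewrite -(e_sec spA y) mulrA [sp_e spB * _]mulrC eAB mul0r. Qed.

Lemma decomp z : z = sp_e spA * z + sp_e spB * z.
Proof. by rewrite -mulrDl he mul1r. Qed.
End Cross.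

Lemma C5 (R A B : comPzRingType) (spA : rsplit R A) (spB : rsplit R B) :
  sp_e spA + sp_e spB = 1 -> prufer A -> prufer B -> prufer R.
Proof.
move=> he hA hB n a [t [ht hrt]].
apply/invE.
have regA : regular_ideal (gen_ideal (fun i => sp_phi spA (a i))).
  by exists (sp_phi spA t); split; [exact: gen_split|exact: phi_regular].
have regB : regular_ideal (gen_ideal (fun i => sp_phi spB (a i))).
  by exists (sp_phi spB t); split; [exact: gen_split|exact: phi_regular].
have [dA [cA [hdA hcA hsA]]] := (invE _).1 (hA _ _ regA).
have [dB [cB [hdB hcB hsB]]] := (invE _).1 (hB _ _ regB).
have cr := crossAB he.
have cr' : forall x y, sec spB x * sec spA y = 0 by move=> x y; rewrite mulrC cr.
exists (sec spA dA + sec spB dB), (fun i => sec spA (cA i) + sec spB (cB i)); split.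
- apply/regularP => z hz.
  have hzA : sp_e spA * z = 0.
    apply: sp_ker; apply: ((regularP _).1 hdA).
    have : sp_e spA * ((sec spA dA + sec spB dB) * z) = 0 by rewrite hz mulr0.
    rewrite mulrA mulrDr (eA_secB he) addr0 e_sec sec_mulr => /(congr1 (sp_phi spA)).
    by rewrite phi_sec phi0.
  have hzB : sp_e spB * z = 0.
    apply: sp_ker; apply: ((regularP _).1 hdB).
    have : sp_e spB * ((sec spA dA + sec spB dB) * z) = 0 by rewrite hz mulr0.
    rewrite mulrA mulrDr (eB_secA he) add0r e_sec sec_mulr => /(congr1 (sp_phi spB)).
    by rewrite phi_sec phi0.
  by rewrite (decomp he z) hzA hzB addr0.
- move=> i j; have [zA hzA] := hcA i j; have [zB hzB] := hcB i j.
  exists (sec spA zA + sec spB zB).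
  rewrite mulrDl !sec_mulr hzA hzB !secM.
  rewrite mulrDl !mulrDr cr cr' addr0 add0r //.
- have -> : \sum_i (sec spA (cA i) + sec spB (cB i)) * a i =
     sec spA (\sum_i cA i * sp_phi spA (a i)) + sec spB (\sum_i cB i * sp_phi spB (a i)).
    rewrite !sec_sum -big_split /=; apply: eq_bigr => i _.
    by rewrite mulrDl !sec_mulr.
  by rewrite hsA hsB.
Qed.

Lemma Tlp (X Y : comPzRingType) (sp : rsplit X Y) : locally_prufer X -> locally_prufer Y.
Proof.
move=> hX M hM.
have hM' := max_pull sp hM.
exact: (T5 (@loc_split _ _ sp _ (maximal_prime hM) _ (maximal_prime hM') (fun x => iff_refl _)) (hX _ hM')).
Qed.

Lemma Clp_side (R A : comPzRingType) (sp : rsplit R A) (M' : R -> Prop) (hM' : maximal_ideal M') :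
  ~ M' (sp_e sp) -> locally_prufer A -> prufer (loc_at (maximal_prime hM')).
Proof.
move=> he hA.
have hM := max_push hM' he.
have [hI _ hm] := maximal_prime hM'.
have hPP := push_iff hI hm he.
have E := loc_split_e (maximal_prime hM) (maximal_prime hM') hPP.
exact: (T5 (split_inv E) (hA _ hM)).
Qed.

Lemma Clp (R A B : comPzRingType) (spA : rsplit R A) (spB : rsplit R B) :
  sp_e spA + sp_e spB = 1 -> locally_prufer A -> locally_prufer B -> locally_prufer R.
Proof.
move=> he hA hB M' hM'.
case: (side_choice (maximal_prime hM') he) => h.
- exact: (@Clp_side _ _ _ _ hM' h hA).
- exact: (@Clp_side _ _ _ _ hM' h hB).
Qed.


Section Zorn.
Variables (R : comPzRingType) (K : R -> Prop).
Hypotheses (hK : is_ideal K) (hK1 : ~ K 1).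

Let T := {I : R -> Prop | [/\ is_ideal I, ~ I 1 & forall x, K x -> I x]}.
Let Rl : rel T := fun A B => `[< forall x, sval A x -> sval B x >].

Lemma exists_maximal : exists M, maximal_ideal M /\ forall x, K x -> M x.
Proof.
have [t ht] : exists t : T, forall s : T, Rl t s -> s = t.
  apply: classical_sets.Zorn.
  - by move=> t; apply/asboolP.
  - by move=> r s t /asboolP h1 /asboolP h2; apply/asboolP => x /h1 /h2.
  - move=> [A hA] [B hB] /asboolP /= h1 /asboolP /= h2.
    have eAB : A = B by apply: funext => x; apply: propext; split; [apply: h1|apply: h2].
    subst B; congr exist; exact: Prop_irrelevance.
  - move=> Ch hCh.
    case: (pselect (exists I0, Ch I0)) => [[I0 hI0]|hne]; last first.
      exists (exist _ K (And3 hK hK1 (fun x h => h))) => s hs.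
      by exfalso; apply: hne; exists s.
    pose U := fun x => exists I : T, Ch I /\ sval I x.
    have hU : [/\ is_ideal U, ~ U 1 & forall x, K x -> U x].
      split.
      + split.
        * by exists I0; split=> //; case: (svalP I0) => [[]].
        * move=> x y [I [hI hx]] [J [hJ hy]].
          case: (hCh I J hI hJ) => /asboolP hIJ.
          - exists J; split=> //; case: (svalP J) => [[_ D _] _ _]; apply: D => //; exact: hIJ.
          - exists I; split=> //; case: (svalP I) => [[_ D _] _ _]; apply: D => //; exact: hIJ.
        * move=> r x [I [hI hx]]; exists I; split=> //.
          by case: (svalP I) => [[_ _ M] _ _]; apply: M.
      + by move=> [I [hI h1]]; case: (svalP I) => _ /(_ h1).
      + by move=> x hx; exists I0; split=> //; case: (svalP I0) => _ _; apply.
    exists (exist _ U hU) => s hs; apply/asboolP => x hx /=; by exists s.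
exists (sval t); case: (svalP t) => hI h1 hKt; split=> //; split=> // J hJ hJt.
case: (pselect (J 1)) => hJ1; first by left.
right => x hx.
have hJT : [/\ is_ideal J, ~ J 1 & forall x, K x -> J x].
  by split=> // y /hKt /hJt.
have := ht (exist _ J hJT); rewrite /Rl /= => /(_ (asboolT hJt)) <- //.
Qed.
End Zorn.

Definition pair2 (R : Type) (u v : R) (i : 'I_2) : R := if val i == 0%N then u else v.

Lemma sum2 (R : comPzRingType) (F : 'I_2 -> R) : \sum_i F i = F ord0 + F (lift ord0 ord0).
Proof. by rewrite big_ord_recl big_ord1. Qed.

Lemma gen2 (R : comPzRingType) (u v x : R) :
  gen_ideal (pair2 u v) x <-> exists al be, x = al * u + be * v.
Proof.
split.
- by move=> [r ->]; rewrite sum2; exists (r ord0), (r (lift ord0 ord0)).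
- move=> [al [be ->]]; exists (pair2 al be); by rewrite sum2.
Qed.

Section Local.
Variables (R : comPzRingType) (P : R -> Prop) (hP : prime_ideal P).
Local Notation fr := (@lfrac R _ (prime_compl_1 hP) (prime_compl_M hP)).

Lemma loc_local (q : loc_at hP) : unit_el q \/ unit_el (1 - q).
Proof.
have [x [s [hs ->]]] := lfrac_surj q.
have [[P0 PD PM] P1 Pm] := hP.
case: (pselect (P x)) => hx.
- right.
  have hsx : ~ P (s - x).
    move=> h; apply: hs; have -> : s = (s - x) + 1 * x by ring.
    by apply: PD => //; apply: PM.
  have -> : 1 - fr x hs = fr (s - x) hs.
    rewrite lfrac1 lfrac_opp lfrac_add; apply/lfrac_eq; exists 1; split=> //.
    by rewrite mul1r; apply/eqP; rewrite subr_eq0; apply/eqP; ring.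
  exists (fr s hsx); rewrite lfrac_mul lfrac1; apply/lfrac_eq; exists 1; split=> //.
  by rewrite mul1r; apply/eqP; rewrite subr_eq0; apply/eqP; ring.
- left; exists (fr s hx); rewrite lfrac_mul lfrac1; apply/lfrac_eq; exists 1; split=> //.
  by rewrite mul1r; apply/eqP; rewrite subr_eq0; apply/eqP; ring.
Qed.

Lemma loc_regular (t : R) : regular t -> regular (loc_map_at hP t).
Proof.
move=> /regularP ht; apply/regularP => q.
have [x [s [hs ->]]] := lfrac_surj q.
rewrite /loc_map_at iotaE lfrac_mul lfrac0 => /lfrac_eq [w [hw hw0]].
apply/lfrac_eq; exists w; split=> //.
rewrite mul0r subr0 mulr1; apply: ht; move: hw0.
by rewrite mul0r subr0 mulr1 mulrCA.
Qed.

Lemma loc_zero (x : R) : loc_map_at hP x = 0 -> exists w, ~ P w /\ w * x = 0.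
Proof.
rewrite /loc_map_at iotaE lfrac0 => /lfrac_eq [w [hw hw0]].
by exists w; split=> //; move: hw0; rewrite mul0r subr0 mulr1.
Qed.
End Local.

Section Gen.
Variable R : comPzRingType.
Implicit Types u v t w : R.

Lemma unit_mul u v : unit_el u -> unit_el v -> unit_el (u * v).
Proof. by move=> [a ha] [b hb]; exists (a * b); rewrite mulrACA ha hb mulr1. Qed.

Lemma G3 (hl : forall q : R, unit_el q \/ unit_el (1 - q)) u v :
  princ_gen (pair2 u v) -> u * v = 0 -> u * u = 0 \/ v * v = 0.
Proof.
move=> [g [[mu hmu] hr]] huv.
have [r0 hr0] := hr ord0; have [r1 hr1] := hr (lift ord0 ord0).
rewrite sum2 in hmu.
have {hmu} hmu : g = mu ord0 * u + mu (lift ord0 ord0) * v by exact: hmu.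
have {hr0} hr0 : u = r0 * g by exact: hr0.
have {hr1} hr1 : v = r1 * g by exact: hr1.
pose p := mu ord0 * r0; pose q := mu (lift ord0 ord0) * r1.
have hg : g = p * g + q * g by rewrite {1}hmu hr0 hr1 /p /q !mulrA.
case: (hl p) => [[y hy]|hp1].
- right; have eg : g = (y * mu ord0) * u.
    rewrite hr0; transitivity ((p * y) * g); first by rewrite hy mul1r.
    by rewrite /p; ring.
  rewrite {1}hr1 eg; transitivity (r1 * y * mu ord0 * (u * v)); first by ring.
  by rewrite huv mulr0.
- have [y' hy'] := hp1.
  case: (hl (q * y')) => [[z hz]|hz1].
  + left; have eg : g = (y' * z * mu (lift ord0 ord0)) * v.
      rewrite hr1; transitivity ((q * y' * z) * g); first by rewrite hz mul1r.
      by rewrite /q; ring.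
    rewrite {1}hr0 eg; transitivity (r0 * y' * z * mu (lift ord0 ord0) * (u * v)); first by ring.
    by rewrite huv mulr0.
  + left.
    have hu : unit_el (1 - p - q).
      have -> : 1 - p - q = (1 - q * y') * (1 - p).
        have e : y' * (1 - p) = 1 by rewrite mulrC.
        transitivity (1 - p - q * (y' * (1 - p))); first by rewrite e mulr1.
        by ring.
      exact: unit_mul.
    have g0 : g = 0.
      have [k hk] := hu.
      have h : (1 - p - q) * g = 0.
        by rewrite !mulrBl mul1r {1}hg; ring.
      transitivity (((1 - p - q) * k) * g); first by rewrite hk mul1r.
      by rewrite mulrAC h mul0r.
    by rewrite {1}hr0 g0 mulr0 mul0r.
Qed.
End Gen.

Section G5.
Variable R : comPzRingType.
Implicit Types u v t w : R.

Lemma G5 u v : prufer R -> u * v = 0 -> regular (u + v) -> exists w, w * (u + v) = u.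
Proof.
move=> hpr huv ht.
have hreg : regular_ideal (gen_ideal (pair2 u v)).
  by exists (u + v); split=> //; apply/gen2; exists 1, 1; rewrite !mul1r.
have [d [c [hd hc hs]]] := (invE _).1 (hpr _ _ hreg).
have [z hz] := hc ord0 ord0.
have {hz} hz : c ord0 * u = d * z by exact: hz.
rewrite sum2 in hs.
have {hs} hs : c ord0 * u + c (lift ord0 ord0) * v = d by exact: hs.
exists z; apply: (regular_cancel hd).
rewrite mulrA -hz -hs.
transitivity (c ord0 * u * u + c ord0 * (u * v)); first by ring.
transitivity (c ord0 * u * u + c (lift ord0 ord0) * (u * v)); last by ring.
by rewrite huv !mulr0.
Qed.

Lemma Glp (hl : forall q : R, unit_el q \/ unit_el (1 - q)) u v :
  prufer R -> u * v = 0 -> regular (u + v) -> u = 0 \/ v = 0.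
Proof.
move=> hpr huv ht; have [w hw] := G5 hpr huv ht.
have /regularP ht' := ht.
have hw1 : w * (1 - w) = 0.
  apply: (ht'); apply: (ht').
  transitivity ((w * (u + v)) * ((1 - w) * (u + v))); first by ring.
  rewrite hw mulrBl mul1r hw.
  by rewrite addrC addKr huv.
case: (hl w) => [[k hk]|[k hk]].
- right.
  have w1 : 1 - w = 0.
    transitivity ((w * k) * (1 - w)); first by rewrite hk mul1r.
    by rewrite mulrAC hw1 mul0r.
  have -> : v = (u + v) - w * (u + v) by rewrite hw addrC addKr.
  by rewrite -{1}[u + v]mul1r -mulrBl w1 mul0r.
- left.
  have w0 : w = 0.
    transitivity (w * ((1 - w) * k)); first by rewrite hk mulr1.
    by rewrite mulrA hw1 mul0r.
  by rewrite -hw w0 mul0r.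
Qed.
End G5.

Lemma G1 (R : comPzRingType) (u v : R) :
  projective_ideal (gen_ideal (pair2 u v)) -> u * v = 0 -> regular (u + v) ->
  exists w, w * (u + v) = u.
Proof.
move=> [m [p [s [hp hpI hs hps]]]] huv ht.
have [I0 ID IM] := gen_ideal_ideal (pair2 u v).
have ht_in : gen_ideal (pair2 u v) (u + v) by apply/gen2; exists 1, 1; rewrite !mul1r.
have hu_in : gen_ideal (pair2 u v) u by apply/gen2; exists 1, 0; rewrite mul1r mul0r addr0.
have s0 : s 0 = 0.
  have := hs 1 0 0 I0 I0; rewrite mul1r addr0 scale1r => h.
  by apply: (@addrI _ (s 0)); rewrite addr0 -h.
have hsl : forall c x, gen_ideal (pair2 u v) x -> s (c * x) = c *: s x.
  by move=> c x hx; have := hs c x 0 hx I0; rewrite !addr0 s0 addr0.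
pose c := s (u + v).
have key : (u + v) *: s u = u *: c by rewrite -hsl // -hsl // mulrC.
have p0 := proj_p0 hp.
have padd : forall x y, p (x + y) = p x + p y.
  by move=> x y; have := hp 1 x y; rewrite scale1r mul1r.
have pscale : forall a x, p (a *: x) = a * p x.
  by move=> a x; have := hp a x 0; rewrite !addr0 p0 addr0.
have /choice [al hal] : forall k : 'I_m, exists al, exists be, p (delta_mx 0 k) = al * u + be * v.
  by move=> k; have /gen2 := hpI (delta_mx 0 k).
have /choice [be hbe] : forall k : 'I_m, exists be, p (delta_mx 0 k) = al k * u + be * v.
  by move=> k; have [be hbe] := hal k; exists be.
have tE : u + v = \sum_k c 0 k * (al k * u + be k * v).
  rewrite -{1}(hps _ ht_in) -/c {1}(row_sum_delta c).
  rewrite (big_morph p padd p0); apply: eq_bigr => k _; by rewrite pscale hbe.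
pose ga := \sum_k c 0 k * al k.
have ut : u * (u + v) = ga * (u * u).
  rewrite {1}tE mulr_sumr /ga mulr_suml; apply: eq_bigr => k _.
  transitivity (c 0 k * al k * (u * u) + c 0 k * be k * (u * v)); first by ring.
  by rewrite huv mulr0 addr0.
have ut' : u * (u + v) = u * u by rewrite mulrDr huv addr0.
have hgu : ga * u = u.
  have h1 : ((1 - ga) * u) * (u + v) = 0.
    transitivity (u * (u + v) - ga * (u * u)); first by rewrite -ut'; ring.
    by rewrite ut subrr.
  have h2 : (1 - ga) * u = 0 by apply: ((regularP _).1 ht); rewrite mulrC.
  by apply/eqP; rewrite eq_sym -subr_eq0 -[X in X - _]mul1r -mulrBl h2.
exists (\sum_k al k * s u 0 k).
rewrite mulr_suml.
transitivity (\sum_k al k * ((u + v) *: s u) 0 k).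
  by apply: eq_bigr => k _; rewrite mxE; ring.
rewrite key; transitivity (ga * u); last exact: hgu.
rewrite /ga mulr_suml; apply: eq_bigr => k _; rewrite mxE; ring.
Qed.

Lemma cont_coef (R : comNzRingType) N (p : {poly R}) k : (k < N)%N -> cont N p p`_k.
Proof.
move=> hk; exists (fun i : 'I_N => (val i == k)%:R).
rewrite (bigD1 (Ordinal hk)) //= eqxx mul1r big1 ?addr0 // => i hi.
have -> : (val i == k) = false.
  by apply/negbTE; apply: contra hi => /eqP e; apply/eqP/val_inj.
by rewrite mul0r.
Qed.

Lemma size_lin (R : comNzRingType) (a b : R) : (size (a%:P + b%:P * 'X)%R <= 2)%N.
Proof.
apply: leq_trans (size_add _ _) _; rewrite geq_max; apply/andP; split.
  by apply: leq_trans (size_polyC_leq1 _) _.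
apply: leq_trans (size_mul_leq _ _) _; rewrite size_polyX.
by have := size_polyC_leq1 b; case: (size b%:P) => [|[]].
Qed.

Lemma G4 (R : comNzRingType) (u v : R) :
  gauss_ring R -> u * v = 0 -> regular (u + v) -> exists w, w * (u + v) = u.
Proof.
move=> hG huv ht.
pose g := u%:P + v%:P * 'X; pose h := v%:P + u%:P * 'X.
have sg : (size g <= 4)%N by apply: leq_trans (size_lin _ _) _.
have sh : (size h <= 4)%N by apply: leq_trans (size_lin _ _) _.
have sgh : (size (g * h)%R <= 4)%N.
  apply: leq_trans (size_mul_leq _ _) _.
  by have := size_lin u v; have := size_lin v u; rewrite -/g -/h;
     case: (size g) => [|[|[|]]] //; case: (size h) => [|[|[|]]].
have vu : v * u = 0 by rewrite mulrC.
have E : g * h = (u * u + v * v)%:P * 'X.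
  transitivity ((u * v)%:P + (u * u + v * v)%:P * 'X + (v * u)%:P * ('X * 'X)).
    by rewrite /g /h !polyCM polyCD; ring.
  by rewrite huv vu !polyC0 mul0r add0r addr0.
have g0 : g`_0 = u by rewrite /g coefD coefC coefMX /= addr0.
have h1 : h`_1 = u by rewrite /h coefD coefC coefMX /= coefC /= add0r.
have hx : prod_set (content g) (content h) (u * u).
  apply/(prod_same (contE sg) (contE sh)); apply: prod1.
  - by rewrite -{1}g0; apply: cont_coef.
  - by rewrite -{1}h1; apply: cont_coef.
have /(contE sgh) [r hr] := (hG g h (u * u)).2 hx.
pose W := \sum_(i < 4) r i * ('X : {poly R})`_i.
have uuW : u * u = (u * u + v * v) * W.
  rewrite {1}hr /W mulr_sumr; apply: eq_bigr => i _; rewrite E coefCM; ring.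
exists W; apply: (regular_cancel ht).
transitivity ((u + v) * (u + v) * W); first by ring.
have -> : (u + v) * (u + v) = u * u + v * v.
  by transitivity (u * u + v * v + (u * v + v * u)); [ring|rewrite huv vu addr0 addr0].
by rewrite -uuW mulrDl vu addr0.
Qed.


Section Amalg.
Variables (A B : comNzRingType) (f : {rmorphism A -> B}) (b : B -> Prop) (hb : is_ideal b).
Local Notation R := (amalg_ring f hb).

Lemma vM (x y : R) : val (x * y) = val x * val y. Proof. by rewrite rmorphM. Qed.
Lemma vD (x y : R) : val (x + y) = val x + val y. Proof. by rewrite rmorphD. Qed.
Lemma v1 : val (1 : R) = 1. Proof. by rewrite rmorph1. Qed.
Lemma v0 : val (0 : R) = 0. Proof. by rewrite rmorph0. Qed.

Lemma amalg_mem (x : R) : exists a y, b y /\ val x = (a, f a + y).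
Proof. by have /asboolP := valP x. Qed.

Lemma val_eq0 (x : R) : (val x).1 = 0 -> (val x).2 = 0 -> x = 0.
Proof.
move=> h1 h2; apply: val_inj; rewrite v0.
by case: (val x) h1 h2 => a c /= -> ->.
Qed.

Definition mkR (p : A * B) (h : p \in amalg_pred f b) : R := Sub p h.
Lemma mkRE p h : val (mkR (p := p) h) = p. Proof. by rewrite /mkR SubK. Qed.

Variables (r : A) (s : B).
Hypotheses (hrb : b (f r)) (hrr : regular r) (hsb : b s) (hsr : regular s).

Lemma u_mem : (r, 0) \in amalg_pred f b.
Proof.
apply/asboolP; exists r, (- f r); split; last by rewrite subrr.
by case: hb => _ _ M; rewrite -mulN1r; apply: M.
Qed.

Lemma v_mem : (0, s) \in amalg_pred f b.
Proof. by apply/asboolP; exists 0, s; split=> //; rewrite rmorph0 add0r. Qed.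

Let u := mkR u_mem.
Let v := mkR v_mem.

Lemma uv0 : u * v = 0.
Proof. by apply: val_eq0; rewrite vM !mkRE /= ?mulr0 ?mul0r. Qed.

Lemma t_reg : regular (u + v).
Proof.
apply/regularP => x; move/(congr1 val); rewrite vM vD !mkRE => h.
have h1 : r * (val x).1 = 0 by have := congr1 fst h; rewrite /= addr0.
have h2 : s * (val x).2 = 0 by have := congr1 snd h; rewrite /= add0r.
apply: val_eq0; [exact: (regularP _).1 hrr _ h1|exact: (regularP _).1 hsr _ h2].
Qed.

Lemma from_w : (exists w, w * (u + v) = u) -> forall y, b y.
Proof.
move=> [w /(congr1 val)]; rewrite vM vD !mkRE => h.
have [a [y0 [hy0 ew]]] := amalg_mem w.
have h1 : a * r = r by have := congr1 fst h; rewrite ew /= addr0.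
have h2 : (f a + y0) * s = 0 by have := congr1 snd h; rewrite ew /= add0r.
have a1 : a = 1.
  by apply: (regular_cancel hrr); rewrite mulr1 mulrC.
have y0E : f a + y0 = 0.
  by apply: ((regularP _).1 hsr); rewrite mulrC.
have hm1 : b (-1) by move: hy0; have -> : y0 = -1 by rewrite -(addKr (f a) y0) y0E a1 rmorph1 addr0.
move=> y; have -> : y = (- y) * (-1) by rewrite mulrNN mulr1.
by case: hb => _ _ M; apply: M.
Qed.

Definition Kid : R -> Prop := fun x => b (val x).2.

Lemma Kid_ideal : is_ideal Kid.
Proof.
case: hb => b0 bD bM; split.
- exact: b0.
- by move=> x y hx hy; apply: (bD).
- by move=> c x hx; apply: (bM).
Qed.

Lemma not_all_b : ~ (forall y, b y) -> ~ Kid 1.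
Proof.
move=> nb h1; have {h1} h1 : b 1 := h1; apply: nb => y.
by rewrite -[y]mulr1; case: hb => _ _ M; apply: M.
Qed.

Lemma loc_contra (M : R -> Prop) (hM : maximal_ideal M) :
  (forall x, Kid x -> M x) ->
  loc_map_at (maximal_prime hM) (u * u) = 0 \/ loc_map_at (maximal_prime hM) (v * v) = 0 ->
  False.
Proof.
move=> hKM [] /loc_zero [w [hw hw0]]; apply: hw; apply: hKM;
  have [a [y [hy ew]]] := amalg_mem w; move: hw0 => /(congr1 val);
  rewrite !vM !mkRE ew /=; case=> h1 h2; rewrite /Kid ew /=.
- have a0 : a = 0.
    apply: ((regularP _).1 hrr); apply: ((regularP _).1 hrr).
    by rewrite mulrCA mulrA -h1; ring.
  by rewrite a0 rmorph0 add0r.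
- have -> : f a + y = 0.
    apply: ((regularP _).1 hsr); apply: ((regularP _).1 hsr).
    by rewrite mulrCA mulrA -h2; ring.
  by case: hb.
Qed.

Lemma K_all_P :
  (forall (M : R -> Prop) (hM : maximal_ideal M),
     loc_map_at (maximal_prime hM) (u * u) = 0 \/ loc_map_at (maximal_prime hM) (v * v) = 0) ->
  forall y, b y.
Proof.
move=> H; case: (pselect (forall y, b y)) => // nb; exfalso.
have [M [hM hKM]] := exists_maximal Kid_ideal (not_all_b nb).
exact: (loc_contra hKM (H M hM)).
Qed.

Lemma loc_uv (M : R -> Prop) (hM : maximal_ideal M) :
  loc_map_at (maximal_prime hM) u * loc_map_at (maximal_prime hM) v = 0.
Proof. by rewrite /loc_map_at -iota_mul uv0 iota0. Qed.

Lemma loc_sq (M : R -> Prop) (hM : maximal_ideal M) (x : R) :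
  loc_map_at (maximal_prime hM) (x * x) =
  loc_map_at (maximal_prime hM) x * loc_map_at (maximal_prime hM) x.
Proof. by rewrite /loc_map_at iota_mul. Qed.

Lemma key1 : semihereditary R -> forall y, b y.
Proof. move=> h; apply: from_w; apply: G1 (h 2%N (pair2 u v)) uv0 t_reg. Qed.

Lemma key2 : wgldim_le1 R -> forall y, b y.
Proof.
move=> h; apply: K_all_P => M hM.
have [_ hdom _] := h _ (maximal_prime hM).
rewrite !loc_sq; case: (hdom _ _ (loc_uv hM)) => ->; rewrite mul0r; by [left|right].
Qed.

Lemma key3 : arithmetical R -> forall y, b y.
Proof.
move=> /arithE h; apply: K_all_P => M hM.
have hp := h 2%N (pair2 u v) M hM.
have hp' : princ_gen (pair2 (loc_map_at (maximal_prime hM) u) (loc_map_at (maximal_prime hM) v)).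
  by apply: princ_ext hp => i; rewrite /pair2; case: ifP.
rewrite !loc_sq; exact: (G3 (@loc_local _ _ (maximal_prime hM)) hp' (loc_uv hM)).
Qed.

Lemma key4 : gauss_ring R -> forall y, b y.
Proof. move=> h; apply: from_w; exact: G4 h uv0 t_reg. Qed.

Lemma key5 : prufer R -> forall y, b y.
Proof. move=> h; apply: from_w; exact: G5 h uv0 t_reg. Qed.

Lemma keylp : locally_prufer R -> forall y, b y.
Proof.
move=> h; apply: K_all_P => M hM.
have hreg : regular (loc_map_at (maximal_prime hM) u + loc_map_at (maximal_prime hM) v).
  by rewrite /loc_map_at -iota_add; apply: loc_regular t_reg.
rewrite !loc_sq.
case: (Glp (@loc_local _ _ (maximal_prime hM)) (h M hM) (loc_uv hM) hreg) => ->;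
  rewrite mul0r; by [left|right].
Qed.
End Amalg.

Section Splits.
Variables (A B : comNzRingType) (f : {rmorphism A -> B}) (b : B -> Prop) (hb : is_ideal b).
Hypothesis hall : forall y, b y.
Local Notation R := (amalg_ring f hb).

Lemma all_mem (p : A * B) : p \in amalg_pred f b.
Proof.
apply/asboolP; exists p.1, (p.2 - f p.1); split; first exact: hall.
by case: p => x y /=; rewrite addrC subrK.
Qed.

Definition mk (p : A * B) : R := mkR hb (all_mem p).
Lemma mkE p : val (mk p) = p. Proof. exact: mkRE. Qed.

Lemma pair_eq (p q : A * B) : p.1 = q.1 -> p.2 = q.2 -> p = q.
Proof. by case: p q => ? ? [? ?] /= -> ->. Qed.

Definition eA : R := mk (1, 0).
Definition eB : R := mk (0, 1).

Lemma spA_add (x y : R) : (val (x + y)).1 = (val x).1 + (val y).1. Proof. by []. Qed.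
Lemma spA_mul (x y : R) : (val (x * y)).1 = (val x).1 * (val y).1. Proof. by []. Qed.
Lemma spA_one : (val (1 : R)).1 = 1. Proof. by []. Qed.
Lemma spA_surj (a : A) : exists x : R, (val x).1 = a.
Proof. by exists (mk (a, 0)); rewrite mkE. Qed.
Lemma spA_ee : eA * eA = eA.
Proof. by apply: val_inj; rewrite vM !mkE; apply: pair_eq; rewrite /= ?mulr1 ?mulr0. Qed.
Lemma spA_phie : (val eA).1 = 1. Proof. by rewrite mkE. Qed.
Lemma spA_ker (x : R) : (val x).1 = 0 -> eA * x = 0.
Proof.
move=> h; apply: val_eq0; rewrite vM mkE /=; first by rewrite h mulr0.
by rewrite mul0r.
Qed.

Definition spA : rsplit R A :=
  @Split R A (fun x => (val x).1) eA spA_add spA_mul spA_one spA_surj spA_ee spA_phie spA_ker.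

Lemma spB_add (x y : R) : (val (x + y)).2 = (val x).2 + (val y).2. Proof. by []. Qed.
Lemma spB_mul (x y : R) : (val (x * y)).2 = (val x).2 * (val y).2. Proof. by []. Qed.
Lemma spB_one : (val (1 : R)).2 = 1. Proof. by []. Qed.
Lemma spB_surj (a : B) : exists x : R, (val x).2 = a.
Proof. by exists (mk (0, a)); rewrite mkE. Qed.
Lemma spB_ee : eB * eB = eB.
Proof. by apply: val_inj; rewrite vM !mkE; apply: pair_eq; rewrite /= ?mulr1 ?mulr0. Qed.
Lemma spB_phie : (val eB).2 = 1. Proof. by rewrite mkE. Qed.
Lemma spB_ker (x : R) : (val x).2 = 0 -> eB * x = 0.
Proof.
move=> h; apply: val_eq0; rewrite vM mkE /=; first by rewrite mul0r.
by rewrite h mulr0.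
Qed.

Definition spB : rsplit R B :=
  @Split R B (fun x => (val x).2) eB spB_add spB_mul spB_one spB_surj spB_ee spB_phie spB_ker.

Lemma eAB1 : sp_e spA + sp_e spB = 1.
Proof. by apply: val_inj; rewrite vD !mkE; apply: pair_eq; rewrite /= ?addr0 ?add0r. Qed.
End Splits.


Unset Implicit Arguments.
Set Strict Implicit.

Theorem corollary3p2 (A B : comNzRingType) (f : {rmorphism A -> B})
  (b : B -> Prop) (hb : is_ideal b) :
  regular_ideal (fun a : A => b (f a)) ->
  regular_ideal b ->
  (forall n : nat, (1 <= n <= 5)%N ->
     (Pcond n (amalg_ring f hb) <->
        [/\ Pcond n A, Pcond n B & forall y : B, b y])) /\
  (locally_prufer (amalg_ring f hb) <->
     [/\ locally_prufer A, locally_prufer B & forall y : B, b y]).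
Proof.
move=> [r [hrb hrr]] [s [hsb hsr]]; split.
- case=> [|[|[|[|[|[|n]]]]]] //= _.
  + split=> [hP|[hA hB hall]].
    * have hall := key1 hrb hrr hsb hsr hP.
      by split=> //; [apply: T1 (spA f hb hall) hP|apply: T1 (spB f hb hall) hP].
    * exact: C1 (eAB1 f hb hall) hA hB.
  + split=> [hP|[hA hB hall]].
    * have hall := key2 hrb hrr hsb hsr hP.
      by split=> //; [apply: T2 (spA f hb hall) hP|apply: T2 (spB f hb hall) hP].
    * exact: C2 (eAB1 f hb hall) hA hB.
  + split=> [hP|[hA hB hall]].
    * have hall := key3 hrb hrr hsb hsr hP.
      by split=> //; [apply: T3 (spA f hb hall) hP|apply: T3 (spB f hb hall) hP].
    * exact: C3 (eAB1 f hb hall) hA hB.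
  + split=> [hP|[hA hB hall]].
    * have hall := key4 hrb hrr hsb hsr hP.
      by split=> //; [apply: T4 (spA f hb hall) hP|apply: T4 (spB f hb hall) hP].
    * exact: C4 (eAB1 f hb hall) hA hB.
  + split=> [hP|[hA hB hall]].
    * have hall := key5 hrb hrr hsb hsr hP.
      by split=> //; [apply: T5 (spA f hb hall) hP|apply: T5 (spB f hb hall) hP].
    * exact: C5 (eAB1 f hb hall) hA hB.
- split=> [hP|[hA hB hall]].
  * have hall := keylp hrb hrr hsb hsr hP.
    by split=> //; [apply: Tlp (spA f hb hall) hP|apply: Tlp (spB f hb hall) hP].
  * exact: Clp (eAB1 f hb hall) hA hB.
Qed.
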